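(* Let $M\in\frac12\mathbb N$, $\varepsilon\in\{0,1\}$, $\tau\in\mathbb H$, and fix $z\in\mathbb C$. Then, as a function of $u$, $F_{M,\varepsilon}(z,u)$ satisfies, for all $\lambda,\mu\in\mathbb Z$, \[F_{M,\varepsilon}(z,u+\lambda\tau+\mu)=(-1)^{2M\mu+\lambda\varepsilon}e^{-2\pi iM(\lambda^2\tau+2\lambda u)}F_{M,\varepsilon}(z,u).\] Moreover, $u\mapsto F_{M,\varepsilon}(z,u)$ is meromorphic on $\mathbb C$, its only poles are simple poles located in $z+\mathbb Z\tau+\mathbb Z$, and its residue at $u=z$ equals $\frac{1}{2\pi i}$.
   Context: Notation: $e(x):=e^{2\pi ix}$, $q:=e(\tau)$. For $M\in\frac12\mathbb N$ and $\varepsilon\in\{0,1\}$, \[F_{M,\varepsilon}(z,u):=e\bigl(M(z-u)\bigr)\sum_{n\in\mathbb Z}\frac{(-1)^{n\varepsilon}e(-2Mnu)\,q^{Mn(n+1)}}{1-q^n e(z-u)}.\] *)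

(* Defs.v *)
From Stdlib Require Import Reals ZArith ClassicalEpsilon.
Open Scope R_scope.

Record Cplx := mkC { Re : R ; Im : R }.

Definition RtoC (r : R) : Cplx := mkC r 0.
Definition IZC (k : Z) : Cplx := RtoC (IZR k).
Definition C0 : Cplx := RtoC 0.
Definition C1 : Cplx := RtoC 1.
Definition Ci : Cplx := mkC 0 1.
Definition Cadd (a b : Cplx) : Cplx := mkC (Re a + Re b) (Im a + Im b).
Definition Copp (a : Cplx) : Cplx := mkC (- Re a) (- Im a).
Definition Csub (a b : Cplx) : Cplx := Cadd a (Copp b).
Definition Cmul (a b : Cplx) : Cplx :=
  mkC (Re a * Re b - Im a * Im b) (Re a * Im b + Im a * Re b).
(* inverse; Cinv 0 = 0 by the usual total convention *)
Definition Cinv (a : Cplx) : Cplx :=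
  mkC (Re a / (Re a * Re a + Im a * Im a)) (- Im a / (Re a * Re a + Im a * Im a)).
Definition Cdiv (a b : Cplx) : Cplx := Cmul a (Cinv b).
Definition Cnorm (a : Cplx) : R := sqrt (Re a * Re a + Im a * Im a).

Definition Cexp (a : Cplx) : Cplx := mkC (exp (Re a) * cos (Im a)) (exp (Re a) * sin (Im a)).

Definition e (x : Cplx) : Cplx := Cexp (Cmul (mkC 0 (2 * PI)) x).

Fixpoint Cpown (a : Cplx) (n : nat) : Cplx :=
  match n with O => C1 | S k => Cmul a (Cpown a k) end.
Definition Cpowz (a : Cplx) (k : Z) : Cplx :=
  match k with
  | Z0 => C1
  | Zpos p => Cpown a (Pos.to_nat p)
  | Zneg p => Cinv (Cpown a (Pos.to_nat p))
  end.

Definition sgn1 (k : Z) : Cplx := RtoC (powerRZ (-1) k).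

Fixpoint psum (f : nat -> Cplx) (n : nat) : Cplx :=
  match n with O => f O | S k => Cadd (psum f k) (f (S k)) end.

Definition series_lim (f : nat -> Cplx) (l : Cplx) : Prop :=
  forall eps : R, 0 < eps -> exists N : nat,
    forall n : nat, (N <= n)%nat -> Cnorm (Csub (psum f n) l) < eps.

Definition Zseries_lim (a : Z -> Cplx) (l : Cplx) : Prop :=
  exists l1 l2 : Cplx,
    series_lim (fun k => a (Z.of_nat k)) l1 /\
    series_lim (fun k => a (- Z.of_nat (S k))%Z) l2 /\
    l = Cadd l1 l2.

Lemma C_inhabited : inhabited Cplx.
Proof. exact (inhabits C0). Qed.

Definition Zsum (a : Z -> Cplx) : Cplx := epsilon C_inhabited (fun l => Zseries_lim a l).

(** * The function F_{M,eps}(z,u), with M = m/2 (m : nat) *)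
Definition Mval (m : nat) : Cplx := RtoC (INR m / 2).

Definition F (m : nat) (eps : Z) (tau z u : Cplx) : Cplx :=
  let q := e tau in
  let M := Mval m in
  Cmul (e (Cmul M (Csub z u)))
    (Zsum (fun n : Z =>
       Cdiv
         (Cmul (sgn1 (n * eps)%Z)
            (Cmul (e (Copp (Cmul (RtoC 2) (Cmul M (Cmul (IZC n) u)))))
                  (* q^{M n (n+1)}; the exponent m n (n+1)/2 is an integer *)
                  (Cpowz q (Z.of_nat m * (n * (n + 1)) / 2)%Z)))
         (Csub C1 (Cmul (Cpowz q n) (e (Csub z u)))))).

Definition Clim (f : Cplx -> Cplx) (p l : Cplx) : Prop :=
  forall eps : R, 0 < eps -> exists delta : R, 0 < delta /\
    forall u : Cplx, 0 < Cnorm (Csub u p) < delta -> Cnorm (Csub (f u) l) < eps.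

Definition C_differentiable_at (f : Cplx -> Cplx) (p : Cplx) : Prop :=
  exists l : Cplx, Clim (fun u => Cdiv (Csub (f u) (f p)) (Csub u p)) p l.

Definition holomorphic_at (f : Cplx -> Cplx) (p : Cplx) : Prop :=
  exists r : R, 0 < r /\ forall w : Cplx, Cnorm (Csub w p) < r -> C_differentiable_at f w.

Definition in_lattice (tau z w : Cplx) : Prop :=
  exists a b : Z, w = Cadd z (Cadd (Cmul (IZC a) tau) (IZC b)).

(* Main.v *)
From Stdlib Require Import Reals ZArith Lra Lia Psatz Field ClassicalEpsilon FunctionalExtensionality.
From Coquelicot Require Import Coquelicot.
Require Import Defs.
Open Scope R_scope.

Lemma Cext (a b : Cplx) : Re a = Re b -> Im a = Im b -> a = b.
Proof. destruct a, b; simpl; intros -> ->; reflexivity. Qed.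

Lemma Cfield_theory : field_theory C0 C1 Cadd Cmul Csub Copp Cdiv Cinv (@eq Cplx).
Proof.
  constructor.
  - constructor; intros; apply Cext; simpl; ring.
  - intro H. injection H. lra.
  - reflexivity.
  - intros [a b] Hp. apply Cext; unfold Cinv, Cmul; simpl.
    + assert (a*a+b*b <> 0).
      { intro H0. apply Hp. assert (a = 0) by nra. assert (b = 0) by nra. subst.
        reflexivity. }
      field. auto.
    + assert (a*a+b*b <> 0).
      { intro H0. apply Hp. assert (a = 0) by nra. assert (b = 0) by nra. subst.
        reflexivity. }
      field. auto.
Qed.
Add Field Cfield : Cfield_theory.

Lemma Cnorm_ge0 a : 0 <= Cnorm a.
Proof. apply sqrt_pos. Qed.

Definition toC (a : Cplx) : C := (Re a, Im a).

Lemma Cnorm_Cmod a : Cnorm a = Cmod (toC a).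
Proof. unfold Cnorm, Cmod, toC; simpl. f_equal; ring. Qed.

Lemma Cnorm_mul a b : Cnorm (Cmul a b) = Cnorm a * Cnorm b.
Proof. rewrite !Cnorm_Cmod, <- Cmod_mult. reflexivity. Qed.

Lemma Cnorm_add a b : Cnorm (Cadd a b) <= Cnorm a + Cnorm b.
Proof. rewrite !Cnorm_Cmod. apply (Cmod_triangle (toC a) (toC b)). Qed.

Lemma Cnorm_opp a : Cnorm (Copp a) = Cnorm a.
Proof. rewrite !Cnorm_Cmod. apply (Cmod_opp (toC a)). Qed.

Lemma Cnorm_sub_sym a b : Cnorm (Csub a b) = Cnorm (Csub b a).
Proof. replace (Csub a b) with (Copp (Csub b a)) by field. apply Cnorm_opp. Qed.

Lemma Cnorm_sub a b : Cnorm (Csub a b) <= Cnorm a + Cnorm b.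
Proof. unfold Csub. rewrite <- (Cnorm_opp b). apply Cnorm_add. Qed.

Lemma Cnorm_rev a b : Cnorm a - Cnorm b <= Cnorm (Csub a b).
Proof.
  replace a with (Cadd (Csub a b) b) at 1 by field.
  pose proof (Cnorm_add (Csub a b) b). lra.
Qed.

Lemma Cnorm_eq0 a : Cnorm a = 0 -> a = C0.
Proof. rewrite Cnorm_Cmod. intro H. apply Cmod_eq_0 in H. unfold toC in H.
  injection H; intros; apply Cext; simpl; auto. Qed.

Lemma Cnorm_C0 : Cnorm C0 = 0.
Proof. unfold Cnorm; simpl. rewrite Rmult_0_l, Rplus_0_l. apply sqrt_0. Qed.

Lemma Cnorm_gt0 a : a <> C0 -> 0 < Cnorm a.
Proof. intro H. destruct (Cnorm_ge0 a); auto. exfalso; apply H, Cnorm_eq0; auto. Qed.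

Lemma Cnorm_inv a : Cnorm (Cinv a) = / Cnorm a.
Proof.
  destruct (Req_dec (Cnorm a) 0) as [H|H].
  - apply Cnorm_eq0 in H. subst. rewrite Cnorm_C0, Rinv_0.
    replace (Cinv C0) with C0. apply Cnorm_C0.
    apply Cext; unfold Cinv, C0, RtoC; simpl; unfold Rdiv; ring.
  - assert (Ha : a <> C0) by (intro; subst; apply H, Cnorm_C0).
    assert (E : Cmul (Cinv a) a = C1) by (field; auto).
    pose proof (f_equal Cnorm E) as E2. rewrite Cnorm_mul in E2.
    assert (Cnorm C1 = 1).
    { unfold Cnorm; simpl. replace (1*1+0*0) with 1 by ring. apply sqrt_1. }
    rewrite H0 in E2. apply (Rmult_eq_reg_r (Cnorm a)); [rewrite E2; field; auto | auto].
Qed.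

Lemma Cnorm_C1 : Cnorm C1 = 1.
Proof. unfold Cnorm; simpl. replace (1*1+0*0) with 1 by ring. apply sqrt_1. Qed.

Lemma Cnorm_div a b : Cnorm (Cdiv a b) = Cnorm a / Cnorm b.
Proof. unfold Cdiv. rewrite Cnorm_mul, Cnorm_inv. reflexivity. Qed.

Lemma Cnorm_RtoC r : Cnorm (RtoC r) = Rabs r.
Proof. unfold Cnorm, RtoC; simpl. rewrite <- sqrt_Rsqr_abs. unfold Rsqr. f_equal; ring. Qed.

Lemma Cnorm_sq a : Cnorm a * Cnorm a = Re a * Re a + Im a * Im a.
Proof. unfold Cnorm. apply sqrt_sqrt. nra. Qed.

Lemma Rabs_sq x : Rabs x * Rabs x = x * x.
Proof. rewrite <- Rabs_mult. apply Rabs_right. nra. Qed.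

Lemma Re_le_Cnorm a : Rabs (Re a) <= Cnorm a.
Proof. pose proof (Cnorm_sq a). pose proof (Rabs_sq (Re a)). pose proof (Cnorm_ge0 a).
  pose proof (Rabs_pos (Re a)). nra. Qed.
Lemma Im_le_Cnorm a : Rabs (Im a) <= Cnorm a.
Proof. pose proof (Cnorm_sq a). pose proof (Rabs_sq (Im a)). pose proof (Cnorm_ge0 a).
  pose proof (Rabs_pos (Im a)). nra. Qed.

Lemma Cnorm_le_ReIm a : Cnorm a <= Rabs (Re a) + Rabs (Im a).
Proof.
  pose proof (Cnorm_sq a). pose proof (Cnorm_ge0 a).
  pose proof (Rabs_pos (Re a)). pose proof (Rabs_pos (Im a)).
  pose proof (Rabs_sq (Re a)). pose proof (Rabs_sq (Im a)).
  nra.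
Qed.

Lemma Rabs_between c b : Rmin 0 b <= c <= Rmax 0 b -> Rabs c <= Rabs b.
Proof. unfold Rmin, Rmax. intros. destruct (Rle_dec 0 b); unfold Rabs;
  repeat destruct Rcase_abs; lra. Qed.

Lemma sin_abs_le b : Rabs (sin b) <= Rabs b.
Proof.
  destruct (MVT_abs sin cos 0 b) as [c [H1 H2]].
  { intros; apply derivable_pt_lim_sin. }
  rewrite sin_0, Rminus_0_r, Rminus_0_r in H1. rewrite H1.
  pose proof (COS_bound c). assert (Rabs (cos c) <= 1) by (apply Rabs_le; apply COS_bound).
  pose proof (Rabs_pos b). nra.
Qed.

Lemma cos_m1_le b : Rabs (cos b - 1) <= b * b.
Proof.
  destruct (MVT_abs cos (fun x => - sin x) 0 b) as [c [H1 H2]].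
  { intros; apply derivable_pt_lim_cos. }
  rewrite cos_0, Rminus_0_r in H1. rewrite H1, Rabs_Ropp.
  pose proof (sin_abs_le c). pose proof (Rabs_between _ _ H2).
  pose proof (Rabs_pos b). pose proof (Rabs_pos (sin c)).
  rewrite <- (Rabs_sq b). nra.
Qed.

Lemma sin_m_le b : Rabs (sin b - b) <= Rabs b * (b * b).
Proof.
  destruct (MVT_abs (fun x => sin x - x) (fun x => cos x - 1) 0 b) as [c [H1 H2]].
  { intros. apply (derivable_pt_lim_minus sin id). apply derivable_pt_lim_sin.
    apply derivable_pt_lim_id. }
  rewrite sin_0, Rminus_0_r, Rminus_0_r in H1. rewrite H1.
  pose proof (cos_m1_le c). pose proof (Rabs_between _ _ H2).
  pose proof (Rabs_pos b). pose proof (Rabs_pos c).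
  assert (c * c <= b * b).
  { rewrite <- (Rabs_sq b), <- (Rabs_sq c). nra. }
  pose proof (Rabs_pos (cos c - 1)). rewrite Rminus_0_r. nra.
Qed.

Lemma exp_m1_le a : Rabs (exp a - 1) <= Rabs a * exp (Rabs a).
Proof.
  destruct (MVT_abs exp exp 0 a) as [c [H1 H2]].
  { intros; apply derivable_pt_lim_exp. }
  rewrite exp_0, !Rminus_0_r in H1. rewrite H1.
  pose proof (Rabs_between _ _ H2). rewrite (Rabs_right (exp c)) by (left; apply exp_pos).
  assert (exp c <= exp (Rabs a)).
  { destruct (Rle_dec c (Rabs a)). destruct r. left; apply exp_increasing; auto.
    subst; lra. pose proof (Rle_abs c). lra. }
  pose proof (Rabs_pos a). nra.
Qed.

Lemma exp_m1m_le a : Rabs (exp a - 1 - a) <= (a * a) * exp (Rabs a).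
Proof.
  destruct (MVT_abs (fun x => exp x - x) (fun x => exp x - 1) 0 a) as [c [H1 H2]].
  { intros. apply (derivable_pt_lim_minus exp id). apply derivable_pt_lim_exp.
    apply derivable_pt_lim_id. }
  rewrite exp_0, !Rminus_0_r in H1. replace (exp a - 1 - a) with (exp a - a - 1) by ring.
  rewrite H1.
  pose proof (exp_m1_le c). pose proof (Rabs_between _ _ H2).
  assert (exp (Rabs c) <= exp (Rabs a)).
  { destruct H0. left; apply exp_increasing; auto. rewrite H0; lra. }
  pose proof (Rabs_pos a). pose proof (Rabs_pos c). pose proof (exp_pos (Rabs c)).
  rewrite <- (Rabs_sq a).
  assert (Rabs c * exp (Rabs c) <= Rabs a * exp (Rabs a)) by (apply Rmult_le_compat; lra). pose proof (Rabs_pos (exp c - 1)). nra.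
Qed.

Lemma Cexp_add a b : Cexp (Cadd a b) = Cmul (Cexp a) (Cexp b).
Proof.
  apply Cext; unfold Cexp, Cmul; simpl; rewrite exp_plus.
  rewrite cos_plus; ring. rewrite sin_plus; ring.
Qed.

Lemma Cnorm_Cexp a : Cnorm (Cexp a) = exp (Re a).
Proof.
  unfold Cnorm, Cexp; simpl.
  replace (exp (Re a) * cos (Im a) * (exp (Re a) * cos (Im a)) +
     exp (Re a) * sin (Im a) * (exp (Re a) * sin (Im a))) with
    (exp (Re a) * exp (Re a) * (sin (Im a) ^ 2 + cos (Im a) ^2)) by ring.
  replace (sin (Im a) ^ 2 + cos (Im a) ^2) with 1.
  rewrite Rmult_1_r. apply sqrt_square. left; apply exp_pos.
  rewrite <- (sin2_cos2 (Im a)). unfold Rsqr. ring.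
Qed.


Lemma Cexp_0 : Cexp C0 = C1.
Proof. apply Cext; unfold Cexp; simpl; rewrite exp_0, ?cos_0, ?sin_0; ring. Qed.

Lemma Cexp_opp a : Cmul (Cexp a) (Cexp (Copp a)) = C1.
Proof. rewrite <- Cexp_add. replace (Cadd a (Copp a)) with C0 by field. apply Cexp_0. Qed.

Lemma Cexp_neq0 a : Cexp a <> C0.
Proof. intro H. pose proof (Cexp_opp a). rewrite H in H0.
  assert (C0 = C1) by (rewrite <- H0; field). injection H1; lra. Qed.

Lemma Cexp_inv a : Cinv (Cexp a) = Cexp (Copp a).
Proof. pose proof (Cexp_opp a). pose proof (Cexp_neq0 a).
  replace (Cexp (Copp a)) with (Cmul (Cinv (Cexp a)) (Cmul (Cexp a) (Cexp (Copp a)))) by (field; auto).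
  rewrite H. field. auto. Qed.

Definition Kexp (r : R) := 2 * exp r + r.

Lemma Kexp_pos r : 0 <= r -> 0 <= Kexp r.
Proof. unfold Kexp. pose proof (exp_pos r). lra. Qed.
Lemma Kexp_mono r s : r <= s -> Kexp r <= Kexp s.
Proof. unfold Kexp. intro. destruct H. pose proof (exp_increasing _ _ H). lra. subst; lra. Qed.

Lemma Cexp_rem h : Cnorm (Csub (Csub (Cexp h) C1) h) <= Kexp (Cnorm h) * (Cnorm h * Cnorm h).
Proof.
  eapply Rle_trans. apply Cnorm_le_ReIm.
  destruct h as [a b]. unfold Cexp, Csub, Cadd, Copp, C1, RtoC; simpl.
  set (N := Cnorm (mkC a b)).
  pose proof (Re_le_Cnorm (mkC a b)) as Ha. pose proof (Im_le_Cnorm (mkC a b)) as Hb.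
  simpl in Ha, Hb. fold N in Ha, Hb.
  pose proof (Cnorm_sq (mkC a b)) as HN. simpl in HN. fold N in HN.
  replace (exp a * cos b + - (1) + - a) with ((exp a - 1 - a) + exp a * (cos b - 1)) by ring.
  replace (exp a * sin b + - 0 + - b) with ((exp a - 1) * sin b + (sin b - b)) by ring.
  pose proof (exp_m1m_le a). pose proof (exp_m1_le a). pose proof (cos_m1_le b).
  pose proof (sin_m_le b). pose proof (sin_abs_le b).
  assert (HE : exp (Rabs a) <= exp N).
  { destruct Ha. left; apply exp_increasing; auto. rewrite H4; lra. }
  pose proof (exp_pos a). pose proof (exp_pos (Rabs a)).
  assert (exp a <= exp (Rabs a)).
  { destruct (Rle_lt_or_eq_dec _ _ (Rle_abs a)) as [Hl|Hl]. left; apply exp_increasing; auto. rewrite <- Hl; lra. }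
  pose proof (Rabs_pos a). pose proof (Rabs_pos b). pose proof (Cnorm_ge0 (mkC a b)). fold N in H9.
  pose proof (Rabs_sq a). pose proof (Rabs_sq b).
  assert (T1 : Rabs (exp a - 1 - a + exp a * (cos b - 1)) <= exp N * (a*a + b*b)).
  { eapply Rle_trans. apply Rabs_triang. rewrite Rabs_mult, (Rabs_right (exp a)) by lra.
    assert (a * a * exp (Rabs a) <= a*a*exp N) by (apply Rmult_le_compat_l; nra).
    assert (exp a * Rabs (cos b - 1) <= exp N * (b*b)) by (apply Rmult_le_compat; try lra; apply Rabs_pos).
    nra. }
  assert (T2 : Rabs ((exp a - 1) * sin b + (sin b - b)) <= exp N * (Rabs a * Rabs b) + N * (b*b)).
  { eapply Rle_trans. apply Rabs_triang. rewrite Rabs_mult.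
    assert (Rabs (exp a - 1) * Rabs (sin b) <= (Rabs a * exp (Rabs a)) * Rabs b)
      by (apply Rmult_le_compat; auto using Rabs_pos).
    assert (Rabs a * exp (Rabs a) * Rabs b <= exp N * (Rabs a * Rabs b)).
    { replace (Rabs a * exp (Rabs a) * Rabs b) with (exp (Rabs a) * (Rabs a * Rabs b)) by ring.
      apply Rmult_le_compat_r; nra. }
    assert (Rabs b * (b*b) <= N * (b*b)) by (apply Rmult_le_compat_r; nra).
    lra. }
  unfold Kexp.
  assert (Rabs a * Rabs b <= N * N) by nra.
  pose proof (exp_pos N).
  assert (exp N * (Rabs a * Rabs b) <= exp N * (N * N)) by (apply Rmult_le_compat_l; lra).
  assert (N * (b * b) <= N * (N * N)) by (apply Rmult_le_compat_l; nra).
  rewrite <- HN in T1. lra.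
Qed.

Lemma e_add a b : e (Cadd a b) = Cmul (e a) (e b).
Proof. unfold e. rewrite <- Cexp_add. f_equal. field. Qed.

Lemma e_opp a : e (Copp a) = Cinv (e a).
Proof. unfold e. rewrite Cexp_inv. f_equal. field. Qed.

Lemma e_neq0 a : e a <> C0.
Proof. apply Cexp_neq0. Qed.

Lemma Cnorm_e a : Cnorm (e a) = exp (- (2 * PI) * Im a).
Proof. unfold e. rewrite Cnorm_Cexp. f_equal. simpl. ring. Qed.

Lemma e_0 : e C0 = C1.
Proof. unfold e. replace (Cmul (mkC 0 (2 * PI)) C0) with C0 by field. apply Cexp_0. Qed.

Lemma e_int k : e (IZC k) = C1.
Proof.
  unfold e, IZC, RtoC, Cexp, C1, RtoC. apply Cext; simpl.
  - replace (0 * IZR k - 2 * PI * 0) with 0 by ring. rewrite exp_0.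
    replace (0 * 0 + 2 * PI * IZR k) with (2 * (IZR k * PI)) by ring.
    rewrite cos_2a_sin, sin_eq_0_1 by (exists k; auto). ring.
  - replace (0 * IZR k - 2 * PI * 0) with 0 by ring. rewrite exp_0.
    replace (0 * 0 + 2 * PI * IZR k) with (2 * (IZR k * PI)) by ring.
    rewrite sin_2a, sin_eq_0_1 by (exists k; auto). ring.
Qed.

Lemma cos_kPI k : cos (IZR k * PI) = powerRZ (-1) k.
Proof.
  assert (Hn : forall n : nat, cos (INR n * PI) = (-1) ^ n).
  { induction n. simpl. rewrite Rmult_0_l, cos_0; auto.
    rewrite S_INR. replace ((INR n + 1) * PI) with (INR n * PI + PI) by ring.
    rewrite neg_cos, IHn. simpl. ring. }
  destruct k as [|p|p]; simpl.
  - rewrite Rmult_0_l, cos_0. auto.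
  - rewrite <- positive_nat_Z, <- INR_IZR_INZ. apply Hn.
  - rewrite <- Pos2Z.opp_pos, opp_IZR, <- positive_nat_Z, <- INR_IZR_INZ.
    replace (- INR (Pos.to_nat p) * PI) with (- (INR (Pos.to_nat p) * PI)) by ring.
    rewrite cos_neg, Hn. rewrite <- pow_inv. f_equal. field.
Qed.

Lemma e_half k : e (RtoC (IZR k / 2)) = sgn1 k.
Proof.
  unfold e, sgn1, Cexp, RtoC. apply Cext; simpl.
  - replace (0 * (IZR k / 2) - 2 * PI * 0) with 0 by ring. rewrite exp_0.
    replace (0 * 0 + 2 * PI * (IZR k / 2)) with (IZR k * PI) by field.
    rewrite cos_kPI. ring.
  - replace (0 * (IZR k / 2) - 2 * PI * 0) with 0 by ring. rewrite exp_0.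
    replace (0 * 0 + 2 * PI * (IZR k / 2)) with (IZR k * PI) by field.
    rewrite sin_eq_0_1 by (exists k; auto). ring.
Qed.

Lemma e_eq1 x : e x = C1 -> exists k, x = IZC k.
Proof.
  destruct x as [a b]. unfold e, Cexp, C1, RtoC. intro H. injection H. simpl. clear H.
  replace (0 * a - 2 * PI * b) with (- (2 * PI * b)) by ring.
  replace (0 * b + 2 * PI * a) with (2 * (PI * a)) by ring.
  intros Hs Hc.
  pose proof (exp_pos (- (2 * PI * b))).
  assert (Hs0 : sin (2 * (PI * a)) = 0) by (apply (Rmult_eq_reg_l (exp (- (2 * PI * b)))); lra).
  pose proof (sin2_cos2 (2 * (PI * a))). rewrite Hs0 in H0. unfold Rsqr in H0.
  assert (Hc1 : cos (2 * (PI * a)) = 1).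
  { assert (cos (2*(PI*a)) = 1 \/ cos (2*(PI*a)) = -1) by (apply Rsqr_eq_abs_0 in H0 || nra; nra).
    destruct H1; auto. rewrite H1 in Hc. nra. }
  rewrite Hc1, Rmult_1_r in Hc.
  assert (b = 0).
  { apply (f_equal ln) in Hc. rewrite ln_exp, ln_1 in Hc. pose proof PI_RGT_0. nra. }
  rewrite cos_2a_sin in Hc1. assert (sin (PI * a) = 0) by nra.
  apply sin_eq_0_0 in H2. destruct H2 as [k Hk].
  exists k. subst b. unfold IZC, RtoC. f_equal. pose proof PI_RGT_0.
  apply (Rmult_eq_reg_r PI); lra.
Qed.

Definition Cseq_lim (x : nat -> Cplx) (l : Cplx) : Prop :=
  forall eps : R, 0 < eps -> exists N : nat,
    forall n : nat, (N <= n)%nat -> Cnorm (Csub (x n) l) < eps.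

Lemma series_lim_seq f l : series_lim f l <-> Cseq_lim (psum f) l.
Proof. split; auto. Qed.

Lemma Cseq_lim_unique x l1 l2 : Cseq_lim x l1 -> Cseq_lim x l2 -> l1 = l2.
Proof.
  intros H1 H2. destruct (Req_dec (Cnorm (Csub l1 l2)) 0) as [H|H].
  - apply Cnorm_eq0 in H. replace l1 with (Cadd (Csub l1 l2) l2) by field. rewrite H. field.
  - pose proof (Cnorm_ge0 (Csub l1 l2)).
    set (d := Cnorm (Csub l1 l2)) in *.
    destruct (H1 (d/2)) as [N1 HN1]. lra. destruct (H2 (d/2)) as [N2 HN2]. lra.
    specialize (HN1 (N1 + N2)%nat ltac:(lia)). specialize (HN2 (N1 + N2)%nat ltac:(lia)).
    assert (Csub l1 l2 = Csub (Csub (x (N1+N2)%nat) l2) (Csub (x (N1+N2)%nat) l1)) by field.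
    pose proof (Cnorm_sub (Csub (x (N1+N2)%nat) l2) (Csub (x (N1+N2)%nat) l1)).
    rewrite <- H3 in H4. fold d in H4. lra.
Qed.

Lemma Cseq_lim_add x y lx ly : Cseq_lim x lx -> Cseq_lim y ly ->
  Cseq_lim (fun n => Cadd (x n) (y n)) (Cadd lx ly).
Proof.
  intros H1 H2 eps Heps. destruct (H1 (eps/2)) as [N1 HN1]. lra.
  destruct (H2 (eps/2)) as [N2 HN2]. lra. exists (N1 + N2)%nat. intros n Hn.
  replace (Csub (Cadd (x n) (y n)) (Cadd lx ly)) with (Cadd (Csub (x n) lx) (Csub (y n) ly)) by field.
  eapply Rle_lt_trans. apply Cnorm_add. specialize (HN1 n ltac:(lia)). specialize (HN2 n ltac:(lia)). lra.
Qed.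

Lemma Cseq_lim_scal c x l : Cseq_lim x l -> Cseq_lim (fun n => Cmul c (x n)) (Cmul c l).
Proof.
  intros H eps Heps. destruct (H (eps / (Cnorm c + 1))) as [N HN].
  { pose proof (Cnorm_ge0 c). apply Rdiv_lt_0_compat; lra. }
  exists N. intros n Hn. specialize (HN n Hn).
  replace (Csub (Cmul c (x n)) (Cmul c l)) with (Cmul c (Csub (x n) l)) by field.
  rewrite Cnorm_mul. pose proof (Cnorm_ge0 c). pose proof (Cnorm_ge0 (Csub (x n) l)).
  assert (Cnorm c * Cnorm (Csub (x n) l) <= (Cnorm c + 1) * Cnorm (Csub (x n) l)) by nra.
  assert ((Cnorm c + 1) * Cnorm (Csub (x n) l) < (Cnorm c + 1) * (eps / (Cnorm c + 1))).
  { apply Rmult_lt_compat_l; lra. }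
  replace ((Cnorm c + 1) * (eps / (Cnorm c + 1))) with eps in H3 by (field; lra). lra.
Qed.

Lemma Cseq_lim_opp x l : Cseq_lim x l -> Cseq_lim (fun n => Copp (x n)) (Copp l).
Proof.
  intro H. pose proof (Cseq_lim_scal (Copp C1) x l H).
  intros eps He. destruct (H0 eps He) as [N HN]. exists N. intros n Hn.
  specialize (HN n Hn). replace (Copp (x n)) with (Cmul (Copp C1) (x n)) by field.
  replace (Copp l) with (Cmul (Copp C1) l) by field. auto.
Qed.

Lemma Cseq_lim_sub x y lx ly : Cseq_lim x lx -> Cseq_lim y ly ->
  Cseq_lim (fun n => Csub (x n) (y n)) (Csub lx ly).
Proof. intros. apply Cseq_lim_add; auto. apply Cseq_lim_opp; auto. Qed.

Lemma Cseq_lim_ext x y l : (forall n, x n = y n) -> Cseq_lim x l -> Cseq_lim y l.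
Proof. intros E H eps He. destruct (H eps He) as [N HN]. exists N. intros n Hn. rewrite <- E. auto. Qed.

Lemma Cseq_lim_bound x l B : Cseq_lim x l -> (forall n, Cnorm (x n) <= B) -> Cnorm l <= B.
Proof.
  intros H Hb. apply Rnot_lt_le. intro Hlt.
  destruct (H (Cnorm l - B)) as [N HN]. lra.
  specialize (HN N (le_n _)). specialize (Hb N).
  pose proof (Cnorm_rev l (x N)). rewrite Cnorm_sub_sym in HN. lra.
Qed.

Lemma Cseq_lim_bound_ev x l B N0 : Cseq_lim x l -> (forall n, (N0 <= n)%nat -> Cnorm (x n) <= B) -> Cnorm l <= B.
Proof.
  intros H Hb. apply (Cseq_lim_bound (fun n => x (N0 + n)%nat)).
  intros eps He. destruct (H eps He) as [N HN]. exists N. intros. apply HN. lia.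
  intros; apply Hb; lia.
Qed.

Lemma psum_add f g n : psum (fun k => Cadd (f k) (g k)) n = Cadd (psum f n) (psum g n).
Proof. induction n; simpl; auto. rewrite IHn. field. Qed.

Lemma psum_scal c f n : psum (fun k => Cmul c (f k)) n = Cmul c (psum f n).
Proof. induction n; simpl; auto. rewrite IHn. field. Qed.

Lemma psum_ext f g n : (forall k, f k = g k) -> psum f n = psum g n.
Proof. intro E. induction n; simpl; rewrite ?IHn; rewrite ?E; auto. Qed.

Lemma psum_shift f n : psum (fun k => f (S k)) n = Csub (psum f (S n)) (f O).
Proof. induction n; simpl. field. rewrite IHn. simpl. field. Qed.

Lemma series_lim_add f g l1 l2 : series_lim f l1 -> series_lim g l2 ->
  series_lim (fun k => Cadd (f k) (g k)) (Cadd l1 l2).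
Proof.
  intros H1 H2. apply series_lim_seq. apply (Cseq_lim_ext (fun n => Cadd (psum f n) (psum g n))).
  intro; rewrite psum_add; auto. apply Cseq_lim_add; auto.
Qed.

Lemma series_lim_scal c f l : series_lim f l -> series_lim (fun k => Cmul c (f k)) (Cmul c l).
Proof.
  intros H. apply series_lim_seq. apply (Cseq_lim_ext (fun n => Cmul c (psum f n))).
  intro; rewrite psum_scal; auto. apply Cseq_lim_scal; auto.
Qed.

Lemma series_lim_ext f g l : (forall k, f k = g k) -> series_lim f l -> series_lim g l.
Proof.
  intros E H. apply series_lim_seq. apply (Cseq_lim_ext (psum f)).
  intro; apply psum_ext; auto. auto.
Qed.

Lemma series_lim_shift f l : series_lim f l -> series_lim (fun k => f (S k)) (Csub l (f O)).
Proof.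
  intros H eps He. destruct (H eps He) as [N HN]. exists N. intros n Hn.
  rewrite psum_shift. replace (Csub (Csub (psum f (S n)) (f O)) (Csub l (f O)))
    with (Csub (psum f (S n)) l) by field. apply HN. lia.
Qed.

Lemma psum_cons x f n : psum (fun k => match k with O => x | S j => f j end) (S n) = Cadd x (psum f n).
Proof. induction n. simpl. auto. change (psum (fun k => match k with O => x | S j => f j end) (S (S n)))
  with (Cadd (psum (fun k => match k with O => x | S j => f j end) (S n)) (f (S n))).
  rewrite IHn. simpl. field. Qed.

Lemma series_lim_cons x f l : series_lim f l ->
  series_lim (fun k => match k with O => x | S j => f j end) (Cadd x l).
Proof.
  intros H eps He. destruct (H eps He) as [N HN]. exists (S N). intros n Hn.
  destruct n. lia. rewrite psum_cons.
  replace (Csub (Cadd x (psum f n)) (Cadd x l)) with (Csub (psum f n) l) by field.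
  apply HN. lia.
Qed.

Lemma Re_psum f n : Re (psum f n) = sum_f_R0 (fun k => Re (f k)) n.
Proof. induction n; simpl; auto. rewrite IHn. auto. Qed.
Lemma Im_psum f n : Im (psum f n) = sum_f_R0 (fun k => Im (f k)) n.
Proof. induction n; simpl; auto. rewrite IHn. auto. Qed.

Lemma psum_norm_le f b n : (forall k, Cnorm (f k) <= b k) -> Cnorm (psum f n) <= sum_f_R0 b n.
Proof. intro H. induction n; simpl; auto. eapply Rle_trans. apply Cnorm_add. specialize (H (S n)). lra. Qed.

Lemma sum_le_Series b n : (forall k, 0 <= b k) -> ex_series b -> sum_f_R0 b n <= Series b.
Proof.
  intros Hp He. apply growing_ineq.
  - intro k. simpl. specialize (Hp (S k)). lra.
  - apply is_series_Reals. apply Series_correct. auto.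
Qed.

Lemma real_series_lim (a : nat -> R) : ex_series a ->
  forall eps, 0 < eps -> exists N, forall n, (N <= n)%nat -> Rabs (sum_f_R0 a n - Series a) < eps.
Proof.
  intros H. apply Series_correct, is_series_Reals in H. intros eps He.
  destruct (H eps He) as [N HN]. exists N. intros n Hn. apply HN. lia.
Qed.

Lemma series_maj f b : (forall k, Cnorm (f k) <= b k) -> ex_series b ->
  exists l, series_lim f l.
Proof.
  intros Hb He.
  assert (HR : ex_series (fun k => Re (f k))).
  { apply (@ex_series_le R_AbsRing R_CompleteNormedModule _ b); auto. intro k. change (norm (Re (f k))) with (Rabs (Re (f k))).
    eapply Rle_trans. apply Re_le_Cnorm. auto. }
  assert (HI : ex_series (fun k => Im (f k))).
  { apply (@ex_series_le R_AbsRing R_CompleteNormedModule _ b); auto. intro k. change (norm (Im (f k))) with (Rabs (Im (f k))).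
    eapply Rle_trans. apply Im_le_Cnorm. auto. }
  exists (mkC (Series (fun k => Re (f k))) (Series (fun k => Im (f k)))).
  intros eps Heps.
  destruct (real_series_lim _ HR (eps/2)) as [N1 H1]. lra.
  destruct (real_series_lim _ HI (eps/2)) as [N2 H2]. lra.
  exists (N1 + N2)%nat. intros n Hn. eapply Rle_lt_trans. apply Cnorm_le_ReIm.
  simpl. rewrite Re_psum, Im_psum. specialize (H1 n ltac:(lia)). specialize (H2 n ltac:(lia)). unfold Rminus in H1, H2. lra.
Qed.

Lemma series_lim_norm_le f b l : (forall k, Cnorm (f k) <= b k) -> (forall k, 0 <= b k) -> ex_series b ->
  series_lim f l -> Cnorm l <= Series b.
Proof.
  intros Hb Hp He Hl. apply (Cseq_lim_bound (psum f)); auto.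
  intro n. eapply Rle_trans. apply psum_norm_le; eauto. apply sum_le_Series; auto.
Qed.

Lemma series_lim_unique f l1 l2 : series_lim f l1 -> series_lim f l2 -> l1 = l2.
Proof. intros. eapply Cseq_lim_unique; eauto. Qed.

Lemma Zseries_unique a l1 l2 : Zseries_lim a l1 -> Zseries_lim a l2 -> l1 = l2.
Proof.
  intros [p1 [n1 [H1 [H2 ->]]]] [p2 [n2 [H3 [H4 ->]]]].
  rewrite (series_lim_unique _ _ _ H1 H3), (series_lim_unique _ _ _ H2 H4). auto.
Qed.

Lemma Zsum_eq a l : Zseries_lim a l -> Zsum a = l.
Proof.
  intro H. unfold Zsum. apply (Zseries_unique a). 2: auto.
  apply (epsilon_spec C_inhabited (fun l => Zseries_lim a l)). exists l; auto.
Qed.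

Lemma Zseries_ext a b l : (forall n, a n = b n) -> Zseries_lim a l -> Zseries_lim b l.
Proof.
  intros E [p [q [H1 [H2 H3]]]]. exists p, q. split; [|split]; auto.
  apply (series_lim_ext (fun k => a (Z.of_nat k))); auto.
  apply (series_lim_ext (fun k => a (- Z.of_nat (S k))%Z)); auto.
Qed.

Lemma Zseries_add a b la lb : Zseries_lim a la -> Zseries_lim b lb ->
  Zseries_lim (fun n => Cadd (a n) (b n)) (Cadd la lb).
Proof.
  intros [p1 [n1 [H1 [H2 ->]]]] [p2 [n2 [H3 [H4 ->]]]].
  exists (Cadd p1 p2), (Cadd n1 n2). split; [|split].
  apply (series_lim_add (fun k => a (Z.of_nat k)) (fun k => b (Z.of_nat k))); auto.
  apply (series_lim_add (fun k => a (- Z.of_nat (S k))%Z) (fun k => b (- Z.of_nat (S k))%Z)); auto.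
  field.
Qed.

Lemma Zseries_scal c a l : Zseries_lim a l -> Zseries_lim (fun n => Cmul c (a n)) (Cmul c l).
Proof.
  intros [p1 [n1 [H1 [H2 ->]]]]. exists (Cmul c p1), (Cmul c n1). split; [|split].
  apply (series_lim_scal c (fun k => a (Z.of_nat k))); auto.
  apply (series_lim_scal c (fun k => a (- Z.of_nat (S k))%Z)); auto.
  field.
Qed.

Lemma Zseries_maj a B : (forall n, Cnorm (a n) <= B n) ->
  ex_series (fun k => B (Z.of_nat k)) -> ex_series (fun k => B (- Z.of_nat (S k))%Z) ->
  exists l, Zseries_lim a l.
Proof.
  intros H H1 H2.
  destruct (series_maj (fun k => a (Z.of_nat k)) _ (fun k => H _) H1) as [l1 Hl1].
  destruct (series_maj (fun k => a (- Z.of_nat (S k))%Z) _ (fun k => H _) H2) as [l2 Hl2].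
  exists (Cadd l1 l2), l1, l2. auto.
Qed.

Lemma Zseries_shift1 a l : Zseries_lim a l -> Zseries_lim (fun n => a (n - 1)%Z) l.
Proof.
  intros [p [q [H1 [H2 ->]]]].
  exists (Cadd (a (-1)%Z) p), (Csub q (a (-1)%Z)). split; [|split].
  - apply (series_lim_ext (fun k => match k with O => a (-1)%Z | S j => a (Z.of_nat j) end)).
    intros [|k]. auto. f_equal. lia. apply series_lim_cons; auto.
  - apply (series_lim_ext (fun k => (fun j => a (- Z.of_nat (S j))%Z) (S k))).
    intros k. simpl. f_equal. lia.
    exact (series_lim_shift (fun j => a (- Z.of_nat (S j))%Z) q H2).
  - field.
Qed.

Lemma Zseries_shiftm1 a l : Zseries_lim a l -> Zseries_lim (fun n => a (n + 1)%Z) l.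
Proof.
  intros [p [q [H1 [H2 ->]]]].
  exists (Csub p (a 0%Z)), (Cadd (a 0%Z) q). split; [|split].
  - apply (series_lim_ext (fun k => (fun j => a (Z.of_nat j)) (S k))).
    intros k. f_equal. lia.
    exact (series_lim_shift (fun j => a (Z.of_nat j)) p H1).
  - apply (series_lim_ext (fun k => match k with O => a 0%Z | S j => a (- Z.of_nat (S j))%Z end)).
    intros [|k]. f_equal. f_equal. lia. apply series_lim_cons; auto.
  - field.
Qed.

Lemma Zseries_shift (lam : Z) a l : Zseries_lim a l -> Zseries_lim (fun n => a (n - lam)%Z) l.
Proof.
  revert a l. induction lam using Z.peano_ind; intros a l H.
  - eapply Zseries_ext; [|exact H]. intro; f_equal; lia.
  - apply IHlam, Zseries_shift1 in H. eapply Zseries_ext; [|exact H]. intro; simpl; f_equal; lia.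
  - apply IHlam, Zseries_shiftm1 in H. eapply Zseries_ext; [|exact H]. intro; simpl; f_equal; lia.
Qed.

Lemma Clim_const c p : Clim (fun _ => c) p c.
Proof. intros eps He. exists 1. split. lra. intros. replace (Csub c c) with C0 by field.
  rewrite Cnorm_C0. auto. Qed.

Lemma Clim_id p : Clim (fun u => u) p p.
Proof. intros eps He. exists eps. split. auto. intros u [_ H]. auto. Qed.

Lemma Clim_add f g p l m : Clim f p l -> Clim g p m -> Clim (fun u => Cadd (f u) (g u)) p (Cadd l m).
Proof.
  intros H1 H2 eps He. destruct (H1 (eps/2)) as [d1 [Hd1 H1']]. lra.
  destruct (H2 (eps/2)) as [d2 [Hd2 H2']]. lra. exists (Rmin d1 d2). split.
  apply Rmin_pos; auto. intros u [Hu1 Hu2].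
  replace (Csub (Cadd (f u) (g u)) (Cadd l m)) with (Cadd (Csub (f u) l) (Csub (g u) m)) by field.
  eapply Rle_lt_trans. apply Cnorm_add.
  pose proof (Rmin_l d1 d2). pose proof (Rmin_r d1 d2).
  specialize (H1' u ltac:(lra)). specialize (H2' u ltac:(lra)). lra.
Qed.

Lemma Clim_mul f g p l m : Clim f p l -> Clim g p m -> Clim (fun u => Cmul (f u) (g u)) p (Cmul l m).
Proof.
  intros H1 H2 eps He.
  set (A := 1 + Cnorm l + Cnorm m). assert (HA : 1 <= A) by (unfold A; pose proof (Cnorm_ge0 l); pose proof (Cnorm_ge0 m); lra).
  set (e1 := Rmin 1 (eps / A)). assert (He1 : 0 < e1) by (apply Rmin_pos; [lra| apply Rdiv_lt_0_compat; lra]).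
  destruct (H1 e1) as [d1 [Hd1 H1']]. auto. destruct (H2 e1) as [d2 [Hd2 H2']]. auto.
  exists (Rmin d1 d2). split. apply Rmin_pos; auto. intros u [Hu1 Hu2].
  pose proof (Rmin_l d1 d2). pose proof (Rmin_r d1 d2).
  specialize (H1' u ltac:(lra)). specialize (H2' u ltac:(lra)).
  replace (Csub (Cmul (f u) (g u)) (Cmul l m)) with
    (Cadd (Cmul (Csub (f u) l) (Csub (g u) m)) (Cadd (Cmul l (Csub (g u) m)) (Cmul m (Csub (f u) l)))) by field.
  eapply Rle_lt_trans. apply Cnorm_add. eapply Rle_lt_trans. apply Rplus_le_compat_l. apply Cnorm_add.
  rewrite !Cnorm_mul.
  set (x := Cnorm (Csub (f u) l)) in *. set (y := Cnorm (Csub (g u) m)) in *.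
  pose proof (Cnorm_ge0 (Csub (f u) l)). pose proof (Cnorm_ge0 (Csub (g u) m)). fold x y in H3, H4.
  pose proof (Cnorm_ge0 l). pose proof (Cnorm_ge0 m).
  assert (e1 <= 1) by apply Rmin_l. assert (e1 <= eps / A) by apply Rmin_r.
  assert (e1 * A <= eps) by (apply (Rmult_le_reg_r (/A)); [apply Rinv_0_lt_compat; lra| field_simplify; try lra; unfold Rdiv in H8; lra]).
  assert (x * y <= x) by nra.
  assert (Cnorm l * y <= Cnorm l * e1) by (apply Rmult_le_compat_l; lra).
  assert (Cnorm m * x <= Cnorm m * e1) by (apply Rmult_le_compat_l; lra).
  assert (e1 * A = e1 + Cnorm l * e1 + Cnorm m * e1) by (unfold A; ring).
  lra.
Qed.

Lemma Clim_inv g p m : m <> C0 -> Clim g p m -> Clim (fun u => Cinv (g u)) p (Cinv m).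
Proof.
  intros Hm H eps He. pose proof (Cnorm_gt0 m Hm) as Hnm.
  set (e1 := Rmin (Cnorm m / 2) (eps * (Cnorm m * Cnorm m) / 2)).
  assert (He1 : 0 < e1) by (apply Rmin_pos; [lra| apply Rdiv_lt_0_compat; [apply Rmult_lt_0_compat; [lra | apply Rmult_lt_0_compat; lra] | lra]]).
  destruct (H e1 He1) as [d [Hd H']]. exists d. split; auto. intros u Hu. specialize (H' u Hu).
  assert (e1 <= Cnorm m / 2) by apply Rmin_l. assert (e1 <= eps * (Cnorm m * Cnorm m) / 2) by apply Rmin_r.
  pose proof (Cnorm_rev m (g u)). rewrite Cnorm_sub_sym in H'.
  assert (Hg : Cnorm m / 2 <= Cnorm (g u)) by lra.
  assert (g u <> C0) by (intro E; rewrite E, Cnorm_C0 in Hg; lra).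
  replace (Csub (Cinv (g u)) (Cinv m)) with (Cdiv (Csub m (g u)) (Cmul (g u) m)) by (field; auto).
  rewrite Cnorm_div, Cnorm_mul.
  apply (Rmult_lt_reg_r (Cnorm (g u) * Cnorm m)). nra. unfold Rdiv. rewrite Rmult_assoc, Rinv_l by nra.
  assert (eps * (Cnorm m * Cnorm m) / 2 <= eps * (Cnorm (g u) * Cnorm m)).
  { unfold Rdiv. rewrite Rmult_assoc. apply Rmult_le_compat_l. lra. nra. }
  lra.
Qed.

Lemma Clim_ext f g p l r : 0 < r -> (forall u, 0 < Cnorm (Csub u p) < r -> f u = g u) ->
  Clim f p l -> Clim g p l.
Proof.
  intros Hr E H eps He. destruct (H eps He) as [d [Hd H']]. exists (Rmin d r). split.
  apply Rmin_pos; auto. intros u [Hu1 Hu2]. pose proof (Rmin_l d r). pose proof (Rmin_r d r).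
  rewrite <- E by lra. apply H'. lra.
Qed.

Lemma Clim_shift f p c l : Clim f p l -> Clim (fun u => f (Csub u c)) (Cadd p c) l.
Proof.
  intros H eps He. destruct (H eps He) as [d [Hd H']]. exists d. split; auto.
  intros u Hu. apply H'. replace (Csub (Csub u c) p) with (Csub u (Cadd p c)) by field. auto.
Qed.

Lemma Clim_bounded_zero g p B r : 0 < r -> (forall u, 0 < Cnorm (Csub u p) < r -> Cnorm (g u) <= B) ->
  Clim (fun u => Cmul (Csub u p) (g u)) p C0.
Proof.
  intros Hr Hb eps He. exists (Rmin r (eps / (Rabs B + 1))). split.
  apply Rmin_pos; auto. apply Rdiv_lt_0_compat; auto. pose proof (Rabs_pos B); lra.
  intros u [Hu1 Hu2]. pose proof (Rmin_l r (eps / (Rabs B + 1))). pose proof (Rmin_r r (eps / (Rabs B + 1))).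
  replace (Csub (Cmul (Csub u p) (g u)) C0) with (Cmul (Csub u p) (g u)) by field.
  rewrite Cnorm_mul. specialize (Hb u ltac:(lra)). pose proof (Rle_abs B). pose proof (Rabs_pos B).
  pose proof (Cnorm_ge0 (g u)).
  assert (Cnorm (Csub u p) * (Rabs B + 1) < eps).
  { apply (Rmult_lt_reg_r (/ (Rabs B + 1))). apply Rinv_0_lt_compat; lra.
    rewrite Rmult_assoc, Rinv_r by lra. rewrite Rmult_1_r. unfold Rdiv in H0. lra. }
  assert (Cnorm (Csub u p) * Cnorm (g u) <= Cnorm (Csub u p) * (Rabs B + 1)) by (apply Rmult_le_compat_l; [apply Cnorm_ge0|lra]).
  lra.
Qed.

Definition QB (f : Cplx -> Cplx) (w d : Cplx) (K r : R) : Prop :=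
  forall u, Cnorm (Csub u w) < r ->
    Cnorm (Csub (Csub (f u) (f w)) (Cmul d (Csub u w))) <= K * (Cnorm (Csub u w) * Cnorm (Csub u w)).

Lemma QB_lip f w d K r u : 0 <= K -> QB f w d K r -> Cnorm (Csub u w) < r ->
  Cnorm (Csub (f u) (f w)) <= (Cnorm d + K * r) * Cnorm (Csub u w).
Proof.
  intros HK H Hu. specialize (H u Hu).
  replace (Csub (f u) (f w)) with (Cadd (Csub (Csub (f u) (f w)) (Cmul d (Csub u w))) (Cmul d (Csub u w))) by field.
  eapply Rle_trans. apply Cnorm_add. rewrite Cnorm_mul.
  pose proof (Cnorm_ge0 (Csub u w)).
  assert (K * (Cnorm (Csub u w) * Cnorm (Csub u w)) <= K * r * Cnorm (Csub u w)).
  { rewrite Rmult_assoc. apply Rmult_le_compat_l; auto. apply Rmult_le_compat_r; lra. }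
  lra.
Qed.

Lemma QB_bound f w d K r u : 0 <= K -> QB f w d K r -> Cnorm (Csub u w) < r ->
  Cnorm (f u) <= Cnorm (f w) + (Cnorm d + K * r) * r.
Proof.
  intros HK H Hu. pose proof (QB_lip f w d K r u HK H Hu).
  pose proof (Cnorm_rev (f u) (f w)). pose proof (Cnorm_ge0 d).
  assert ((Cnorm d + K * r) * Cnorm (Csub u w) <= (Cnorm d + K * r) * r).
  { apply Rmult_le_compat_l. pose proof (Cnorm_ge0 (Csub u w)). nra. lra. }
  lra.
Qed.

Lemma QB_Clim f w d K r : 0 <= K -> 0 < r -> QB f w d K r -> Clim f w (f w).
Proof.
  intros HK Hr H eps He. set (L := Cnorm d + K * r + 1).
  assert (HL : 0 < L) by (unfold L; pose proof (Cnorm_ge0 d); nra).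
  exists (Rmin r (eps / L)). split. apply Rmin_pos; auto. apply Rdiv_lt_0_compat; auto.
  intros u [Hu1 Hu2]. pose proof (Rmin_l r (eps / L)). pose proof (Rmin_r r (eps / L)).
  pose proof (QB_lip f w d K r u HK H ltac:(lra)).
  assert (Cnorm (Csub u w) * L < eps).
  { apply (Rmult_lt_reg_r (/ L)). apply Rinv_0_lt_compat; lra.
    rewrite Rmult_assoc, Rinv_r by lra. unfold Rdiv in H1. lra. }
  assert ((Cnorm d + K * r) * Cnorm (Csub u w) <= Cnorm (Csub u w) * L).
  { unfold L. pose proof (Cnorm_ge0 (Csub u w)). nra. }
  lra.
Qed.

Lemma QB_diff f w d K r : 0 <= K -> 0 < r -> QB f w d K r -> C_differentiable_at f w.
Proof.
  intros HK Hr H. exists d. intros eps He.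
  exists (Rmin r (eps / (K + 1))). split. apply Rmin_pos; auto. apply Rdiv_lt_0_compat; lra.
  intros u [Hu1 Hu2]. pose proof (Rmin_l r (eps / (K + 1))). pose proof (Rmin_r r (eps / (K + 1))).
  specialize (H u ltac:(lra)).
  assert (Hz : Csub u w <> C0) by (intro E; rewrite E, Cnorm_C0 in Hu1; lra).
  replace (Csub (Cdiv (Csub (f u) (f w)) (Csub u w)) d) with
    (Cdiv (Csub (Csub (f u) (f w)) (Cmul d (Csub u w))) (Csub u w)) by (field; auto).
  rewrite Cnorm_div. apply (Rmult_lt_reg_r (Cnorm (Csub u w))); auto.
  unfold Rdiv. rewrite Rmult_assoc, Rinv_l by lra. rewrite Rmult_1_r.
  assert (Cnorm (Csub u w) * (K + 1) < eps).
  { apply (Rmult_lt_reg_r (/ (K + 1))). apply Rinv_0_lt_compat; lra.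
    rewrite Rmult_assoc, Rinv_r by lra. unfold Rdiv in H1. lra. }
  nra.
Qed.

Lemma QB_const c w r : QB (fun _ => c) w C0 0 r.
Proof. intros u Hu. replace (Csub (Csub c c) (Cmul C0 (Csub u w))) with C0 by field.
  rewrite Cnorm_C0. lra. Qed.

Lemma QB_add f g w d1 d2 K1 K2 r : QB f w d1 K1 r -> QB g w d2 K2 r ->
  QB (fun u => Cadd (f u) (g u)) w (Cadd d1 d2) (K1 + K2) r.
Proof.
  intros H1 H2 u Hu. specialize (H1 u Hu). specialize (H2 u Hu).
  replace (Csub (Csub (Cadd (f u) (g u)) (Cadd (f w) (g w))) (Cmul (Cadd d1 d2) (Csub u w))) with
    (Cadd (Csub (Csub (f u) (f w)) (Cmul d1 (Csub u w))) (Csub (Csub (g u) (g w)) (Cmul d2 (Csub u w)))) by field.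
  eapply Rle_trans. apply Cnorm_add. lra.
Qed.

Lemma QB_scal c f w d K r : QB f w d K r -> QB (fun u => Cmul c (f u)) w (Cmul c d) (Cnorm c * K) r.
Proof.
  intros H u Hu. specialize (H u Hu).
  replace (Csub (Csub (Cmul c (f u)) (Cmul c (f w))) (Cmul (Cmul c d) (Csub u w))) with
    (Cmul c (Csub (Csub (f u) (f w)) (Cmul d (Csub u w)))) by field.
  rewrite Cnorm_mul. rewrite Rmult_assoc. apply Rmult_le_compat_l; auto. apply Cnorm_ge0.
Qed.

Lemma QB_ext f g w d K r : (forall u, f u = g u) -> QB f w d K r -> QB g w d K r.
Proof. intros E H u Hu. rewrite <- !E. auto. Qed.

Definition QBmulK (K1 K2 n1 n2 fw gw r : R) := K1 * gw + fw * K2 + (n1 + K1 * r) * (n2 + K2 * r).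

Lemma QB_mul f g w d1 d2 K1 K2 r : 0 <= K1 -> 0 <= K2 -> QB f w d1 K1 r -> QB g w d2 K2 r ->
  QB (fun u => Cmul (f u) (g u)) w (Cadd (Cmul d1 (g w)) (Cmul (f w) d2))
     (QBmulK K1 K2 (Cnorm d1) (Cnorm d2) (Cnorm (f w)) (Cnorm (g w)) r) r.
Proof.
  intros HK1 HK2 H1 H2 u Hu.
  pose proof (QB_lip f w d1 K1 r u HK1 H1 Hu) as L1. pose proof (QB_lip g w d2 K2 r u HK2 H2 Hu) as L2.
  specialize (H1 u Hu). specialize (H2 u Hu).
  set (h := Csub u w) in *.
  replace (Csub (Csub (Cmul (f u) (g u)) (Cmul (f w) (g w))) (Cmul (Cadd (Cmul d1 (g w)) (Cmul (f w) d2)) h))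
    with (Cadd (Cmul (Csub (Csub (f u) (f w)) (Cmul d1 h)) (g w))
           (Cadd (Cmul (f w) (Csub (Csub (g u) (g w)) (Cmul d2 h)))
                 (Cmul (Csub (f u) (f w)) (Csub (g u) (g w))))) by (unfold h; field).
  eapply Rle_trans. apply Cnorm_add. eapply Rle_trans. apply Rplus_le_compat_l. apply Cnorm_add.
  rewrite !Cnorm_mul. unfold QBmulK.
  pose proof (Cnorm_ge0 (g w)). pose proof (Cnorm_ge0 (f w)). pose proof (Cnorm_ge0 h).
  pose proof (Cnorm_ge0 d1). pose proof (Cnorm_ge0 d2).
  assert (A1 : Cnorm (Csub (Csub (f u) (f w)) (Cmul d1 h)) * Cnorm (g w) <= K1 * (Cnorm h * Cnorm h) * Cnorm (g w))
    by (apply Rmult_le_compat_r; auto).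
  assert (A2 : Cnorm (f w) * Cnorm (Csub (Csub (g u) (g w)) (Cmul d2 h)) <= Cnorm (f w) * (K2 * (Cnorm h * Cnorm h)))
    by (apply Rmult_le_compat_l; auto).
  assert (A3 : Cnorm (Csub (f u) (f w)) * Cnorm (Csub (g u) (g w)) <=
     ((Cnorm d1 + K1 * r) * Cnorm h) * ((Cnorm d2 + K2 * r) * Cnorm h))
    by (apply Rmult_le_compat; auto using Cnorm_ge0).
  nra.
Qed.

Lemma QB_exp a w r : 0 <= r -> QB (fun u => Cexp (Cmul a u)) w (Cmul a (Cexp (Cmul a w)))
   (Cnorm (Cexp (Cmul a w)) * Kexp (Cnorm a * r) * (Cnorm a * Cnorm a)) r.
Proof.
  intros Hr u Hu. set (h := Csub u w) in *.
  replace (Csub (Csub (Cexp (Cmul a u)) (Cexp (Cmul a w))) (Cmul (Cmul a (Cexp (Cmul a w))) h))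
    with (Cmul (Cexp (Cmul a w)) (Csub (Csub (Cexp (Cmul a h)) C1) (Cmul a h))).
  2:{ replace (Cmul a u) with (Cadd (Cmul a w) (Cmul a h)) by (unfold h; field).
      rewrite Cexp_add. field. }
  rewrite Cnorm_mul. pose proof (Cexp_rem (Cmul a h)). rewrite Cnorm_mul in H.
  pose proof (Cnorm_ge0 a). pose proof (Cnorm_ge0 h). pose proof (Cnorm_ge0 (Cexp (Cmul a w))).
  assert (Kexp (Cnorm a * Cnorm h) <= Kexp (Cnorm a * r)) by (apply Kexp_mono; apply Rmult_le_compat_l; lra).
  pose proof (Kexp_pos (Cnorm a * Cnorm h) ltac:(nra)).
  assert (Kexp (Cnorm a * Cnorm h) * (Cnorm a * Cnorm h * (Cnorm a * Cnorm h)) <=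
          Kexp (Cnorm a * r) * (Cnorm a * Cnorm a) * (Cnorm h * Cnorm h)).
  { replace (Cnorm a * Cnorm h * (Cnorm a * Cnorm h)) with ((Cnorm a * Cnorm a) * (Cnorm h * Cnorm h)) by ring.
    rewrite <- Rmult_assoc. apply Rmult_le_compat_r. nra. apply Rmult_le_compat_r; nra. }
  eapply Rle_trans. apply Rmult_le_compat_l. auto. eapply Rle_trans. apply H. apply H5.
  right; ring.
Qed.

Definition QBinvK (K n gw d r : R) := K / (d * d) + n * (n + K * r) / (d * d * d).

Lemma QB_inv g w d K r dl : 0 <= K -> 0 < dl -> 0 < r -> (forall u, Cnorm (Csub u w) < r -> dl <= Cnorm (g u)) ->
  QB g w d K r ->
  QB (fun u => Cinv (g u)) w (Copp (Cmul d (Cinv (Cmul (g w) (g w))))) (QBinvK K (Cnorm d) (Cnorm (g w)) dl r) r.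
Proof.
  intros HK Hdl Hr Hlow H u Hu.
  pose proof (QB_lip g w d K r u HK H Hu) as L. specialize (H u Hu).
  pose proof (Hlow u Hu) as Hgu. pose proof (Hlow w ltac:(replace (Csub w w) with C0 by field; rewrite Cnorm_C0; lra)) as Hgw.
  assert (Nu : g u <> C0) by (intro E; rewrite E, Cnorm_C0 in Hgu; lra).
  assert (Nw : g w <> C0) by (intro E; rewrite E, Cnorm_C0 in Hgw; lra).
  set (h := Csub u w) in *.
  replace (Csub (Csub (Cinv (g u)) (Cinv (g w))) (Cmul (Copp (Cmul d (Cinv (Cmul (g w) (g w))))) h))
    with (Cadd (Copp (Cdiv (Csub (Csub (g u) (g w)) (Cmul d h)) (Cmul (g u) (g w))))
               (Cdiv (Cmul (Cmul d h) (Csub (g u) (g w))) (Cmul (g u) (Cmul (g w) (g w)))))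
    by (field; auto).
  eapply Rle_trans. apply Cnorm_add. rewrite Cnorm_opp, !Cnorm_div, !Cnorm_mul.
  set (a := Cnorm (g u)) in *. set (b := Cnorm (g w)) in *. set (x := Cnorm h) in *.
  pose proof (Cnorm_ge0 h). fold x in H0. pose proof (Cnorm_ge0 d).
  set (R1 := Cnorm (Csub (Csub (g u) (g w)) (Cmul d h))) in *.
  set (R2 := Cnorm (Csub (g u) (g w))) in *.
  pose proof (Cnorm_ge0 (Csub (g u) (g w))). fold R2 in H2.
  unfold QBinvK.
  assert (T1 : R1 / (a * b) <= K / (dl * dl) * (x * x)).
  { unfold Rdiv. apply (Rle_trans _ (R1 * / (dl * dl))).
    apply Rmult_le_compat_l. unfold R1; apply Cnorm_ge0.
    apply Rinv_le_contravar. nra. apply Rmult_le_compat; lra.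
    replace (K * / (dl * dl) * (x * x)) with (K * (x * x) * / (dl * dl)) by ring.
    apply Rmult_le_compat_r. left; apply Rinv_0_lt_compat; nra. auto. }
  assert (T2 : Cnorm d * x * R2 / (a * (b * b)) <= Cnorm d * (Cnorm d + K * r) / (dl * dl * dl) * (x * x)).
  { unfold Rdiv. apply (Rle_trans _ (Cnorm d * x * R2 * / (dl * dl * dl))).
    apply Rmult_le_compat_l. apply Rmult_le_pos; [nra|auto].
    apply Rinv_le_contravar. repeat apply Rmult_lt_0_compat; lra. replace (dl * dl * dl) with (dl * (dl * dl)) by ring.
    assert (dl * dl <= b * b) by (apply Rmult_le_compat; lra). apply Rmult_le_compat; nra.
    replace (Cnorm d * (Cnorm d + K * r) * / (dl * dl * dl) * (x * x)) with
      (Cnorm d * x * ((Cnorm d + K * r) * x) * / (dl * dl * dl)) by ring.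
    apply Rmult_le_compat_r. left; apply Rinv_0_lt_compat; repeat apply Rmult_lt_0_compat; lra.
    apply Rmult_le_compat_l. nra. auto. }
  lra.
Qed.

Lemma psum_lin3 a b c h n : psum (fun k => Csub (Csub (a k) (b k)) (Cmul (c k) h)) n =
  Csub (Csub (psum a n) (psum b n)) (Cmul (psum c n) h).
Proof. induction n; simpl; auto. rewrite IHn. field. Qed.

Lemma sum_f_R0_scal (K : nat -> R) X n : sum_f_R0 (fun k => K k * X) n = sum_f_R0 K n * X.
Proof. induction n; simpl; auto. rewrite IHn. ring. Qed.

Lemma series_rem_bound a b c h pa pb pc (K : nat -> R) X :
  series_lim a pa -> series_lim b pb -> series_lim c pc ->
  (forall k, Cnorm (Csub (Csub (a k) (b k)) (Cmul (c k) h)) <= K k * X) ->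
  (forall k, 0 <= K k) -> 0 <= X -> ex_series K ->
  Cnorm (Csub (Csub pa pb) (Cmul pc h)) <= Series K * X.
Proof.
  intros Ha Hb Hc Hk HK HX He.
  apply (Cseq_lim_bound (fun n => Csub (Csub (psum a n) (psum b n)) (Cmul (psum c n) h))).
  - apply Cseq_lim_sub. apply Cseq_lim_sub; auto.
    apply (Cseq_lim_ext (fun n => Cmul h (psum c n))). intro; field. replace (Cmul pc h) with (Cmul h pc) by field.
    apply Cseq_lim_scal; auto.
  - intro n. rewrite <- psum_lin3. eapply Rle_trans. apply psum_norm_le. exact Hk.
    rewrite sum_f_R0_scal. apply Rmult_le_compat_r; auto. apply sum_le_Series; auto.
Qed.

Lemma QB_Zseries (f : Z -> Cplx -> Cplx) (d : Z -> Cplx) (K : Z -> R) Sf D w r :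
  (forall n, QB (f n) w (d n) (K n) r) ->
  (forall u, Cnorm (Csub u w) < r -> Zseries_lim (fun n => f n u) (Sf u)) ->
  Zseries_lim d D -> (forall n, 0 <= K n) ->
  ex_series (fun k => K (Z.of_nat k)) -> ex_series (fun k => K (- Z.of_nat (S k))%Z) ->
  QB Sf w D (Series (fun k => K (Z.of_nat k)) + Series (fun k => K (- Z.of_nat (S k))%Z)) r.
Proof.
  intros Hf Hs Hd HK He1 He2 u Hu.
  assert (Hw : Cnorm (Csub w w) < r) by (replace (Csub w w) with C0 by field; rewrite Cnorm_C0;
    pose proof (Cnorm_ge0 (Csub u w)); lra).
  destruct (Hs u Hu) as [pu [qu [Hpu [Hqu Eu]]]]. destruct (Hs w Hw) as [pw [qw [Hpw [Hqw Ew]]]].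
  destruct Hd as [pd [qd [Hpd [Hqd Ed]]]]. rewrite Eu, Ew, Ed.
  set (h := Csub u w). set (X := Cnorm h * Cnorm h).
  assert (HX : 0 <= X) by (unfold X; pose proof (Cnorm_ge0 h); nra).
  pose proof (series_rem_bound _ _ _ h _ _ _ (fun k => K (Z.of_nat k)) X Hpu Hpw Hpd
     (fun k => Hf (Z.of_nat k) u Hu) (fun k => HK _) HX He1).
  pose proof (series_rem_bound _ _ _ h _ _ _ (fun k => K (- Z.of_nat (S k))%Z) X Hqu Hqw Hqd
     (fun k => Hf _ u Hu) (fun k => HK _) HX He2).
  replace (Csub (Csub (Cadd pu qu) (Cadd pw qw)) (Cmul (Cadd pd qd) h)) with
    (Cadd (Csub (Csub pu pw) (Cmul pd h)) (Csub (Csub qu qw) (Cmul qd h))) by field.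
  eapply Rle_trans. apply Cnorm_add. fold X. lra.
Qed.

Definition EB (f : Z -> R) : Prop :=
  exists C A, 0 <= C /\ 1 <= A /\ forall n, Rabs (f n) <= C * A ^ (Z.abs_nat n).

Lemma pow_ge1 A k : 1 <= A -> 1 <= A ^ k.
Proof. intro. induction k; simpl. lra. nra. Qed.

Lemma pow_mono_base A B k : 0 <= A <= B -> A ^ k <= B ^ k.
Proof. intros. apply pow_incr; auto. Qed.

Lemma EB_const c : EB (fun _ => c).
Proof. exists (Rabs c), 1. split. apply Rabs_pos. split. lra. intro. rewrite pow1. lra. Qed.

Lemma EB_le f g : (forall n, Rabs (g n) <= Rabs (f n)) -> EB f -> EB g.
Proof. intros H [C [A [H1 [H2 H3]]]]. exists C, A. repeat split; auto. intro n. eapply Rle_trans; eauto. Qed.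

Lemma EB_add f g : EB f -> EB g -> EB (fun n => f n + g n).
Proof.
  intros [C1 [A1 [H1 [H2 H3]]]] [C2 [A2 [H4 [H5 H6]]]].
  exists (C1 + C2), (Rmax A1 A2). split. lra. split. eapply Rle_trans; [|apply Rmax_l]. auto.
  intro n. eapply Rle_trans. apply Rabs_triang.
  pose proof (pow_mono_base A1 (Rmax A1 A2) (Z.abs_nat n) ltac:(split; [lra|apply Rmax_l])).
  pose proof (pow_mono_base A2 (Rmax A1 A2) (Z.abs_nat n) ltac:(split; [lra|apply Rmax_r])).
  specialize (H3 n). specialize (H6 n).
  assert (C1 * A1 ^ Z.abs_nat n <= C1 * Rmax A1 A2 ^ Z.abs_nat n) by (apply Rmult_le_compat_l; auto).
  assert (C2 * A2 ^ Z.abs_nat n <= C2 * Rmax A1 A2 ^ Z.abs_nat n) by (apply Rmult_le_compat_l; auto).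
  lra.
Qed.

Lemma EB_mul f g : EB f -> EB g -> EB (fun n => f n * g n).
Proof.
  intros [C1 [A1 [H1 [H2 H3]]]] [C2 [A2 [H4 [H5 H6]]]].
  exists (C1 * C2), (A1 * A2). split. nra. split. nra.
  intro n. rewrite Rabs_mult, Rpow_mult_distr.
  replace (C1 * C2 * (A1 ^ Z.abs_nat n * A2 ^ Z.abs_nat n)) with
     ((C1 * A1 ^ Z.abs_nat n) * (C2 * A2 ^ Z.abs_nat n)) by ring.
  apply Rmult_le_compat; auto using Rabs_pos.
Qed.

Lemma EB_pos_le f g : (forall n, 0 <= g n <= f n) -> EB f -> EB g.
Proof. intros H. apply EB_le. intro n. specialize (H n). rewrite !Rabs_right; lra. Qed.

Lemma EB_pow B : 0 <= B -> EB (fun n => B ^ Z.abs_nat n).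
Proof.
  intro HB. exists 1, (Rmax 1 B). split. lra. split. apply Rmax_l. intro n.
  rewrite Rabs_right. rewrite Rmult_1_l. apply pow_mono_base. split; auto. apply Rmax_r.
  apply Rle_ge, pow_le; auto.
Qed.

Lemma exp_mult_INR x k : exp (INR k * x) = exp x ^ k.
Proof. induction k. simpl. rewrite Rmult_0_l. apply exp_0. rewrite S_INR. simpl.
  rewrite <- IHk, <- exp_plus. f_equal. ring. Qed.

Lemma IZR_abs_INR n : IZR (Z.abs n) = INR (Z.abs_nat n).
Proof. rewrite INR_IZR_INZ, Zabs2Nat.id_abs. auto. Qed.

Lemma EB_exp a b : 0 <= a -> EB (fun n => exp (a * IZR (Z.abs n) + b)).
Proof.
  intro Ha. apply (EB_le (fun n => exp b * (exp a ^ Z.abs_nat n))).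
  - intro n. right. f_equal. rewrite exp_plus, IZR_abs_INR, (Rmult_comm a), exp_mult_INR. ring.
  - apply EB_mul. apply EB_const. apply EB_pow. left; apply exp_pos.
Qed.

Lemma INR_le_pow2 k : INR k <= 2 ^ k.
Proof. induction k. simpl; lra. rewrite S_INR. simpl. pose proof (pow_ge1 2 k ltac:(lra)). lra. Qed.

Lemma EB_absn : EB (fun n => IZR (Z.abs n)).
Proof.
  apply (EB_le (fun n => 2 ^ Z.abs_nat n)). 2: apply EB_pow; lra.
  intro n. rewrite IZR_abs_INR. rewrite !Rabs_right. apply INR_le_pow2.
  apply Rle_ge, pow_le; lra. apply Rle_ge, pos_INR.
Qed.

Lemma gauss_series (A c : R) : 1 <= A -> 0 < c ->
  ex_series (fun k => A ^ k * exp (- c * (INR k * (INR k + 1)))).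
Proof.
  intros HA Hc.
  apply (ex_series_ext (fun k => Rabs (A ^ k * exp (- c * (INR k * (INR k + 1)))))).
  { intro. apply Rabs_right. apply Rle_ge, Rmult_le_pos. apply pow_le; lra. left; apply exp_pos. }
  apply (ex_series_DAlembert _ 0). lra.
  { intro n. apply Rgt_not_eq, Rmult_lt_0_compat. apply pow_lt; lra. apply exp_pos. }
  set (a := fun k => A ^ k * exp (- c * (INR k * (INR k + 1)))).
  assert (Ha : forall n, a n <> 0).
  { intro n. apply Rgt_not_eq, Rmult_lt_0_compat. apply pow_lt; lra. apply exp_pos. }
  assert (Hs : forall n, a (S n) = a n * (A * exp (-(2*c)) ^ (S n))).
  { intro n. unfold a. rewrite <- exp_mult_INR. rewrite !S_INR. simpl pow.
    replace (- c * ((INR n + 1) * (INR n + 1 + 1))) with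
      (- c * (INR n * (INR n + 1)) + (INR n + 1) * - (2 * c)) by ring.
    rewrite exp_plus. ring. }
  apply (is_lim_seq_ext (fun n => A * exp (-(2*c)) ^ (S n))).
  { intro n. change (A * exp (- (2 * c)) ^ S n = Rabs (a (S n) / a n)). rewrite Hs. rewrite Rabs_right. field; auto.
    replace (a n * (A * exp (- (2 * c)) ^ S n) / a n) with (A * exp (- (2 * c)) ^ S n) by (field; auto).
    apply Rle_ge, Rmult_le_pos. lra. apply pow_le. left; apply exp_pos. }
  replace (Finite 0) with (Rbar_mult A 0) by (simpl; f_equal; ring).
  apply is_lim_seq_scal_l. apply -> (is_lim_seq_incr_1 (fun n => exp (- (2 * c)) ^ n)).
  apply is_lim_seq_geom. rewrite Rabs_right. rewrite <- exp_0. apply exp_increasing. lra.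
  left; apply exp_pos.
Qed.

Lemma Cpown_e a n : Cpown (e a) n = e (Cmul (RtoC (INR n)) a).
Proof.
  induction n; simpl Cpown.
  - replace (Cmul (RtoC (INR 0)) a) with C0 by (apply Cext; simpl; ring). rewrite e_0. auto.
  - rewrite IHn, <- e_add. f_equal. rewrite S_INR. apply Cext; simpl; ring.
Qed.

Lemma Cpowz_e a k : Cpowz (e a) k = e (Cmul (IZC k) a).
Proof.
  destruct k as [|p|p]; simpl.
  - replace (Cmul (IZC 0) a) with C0 by (apply Cext; simpl; ring). rewrite e_0. auto.
  - rewrite Cpown_e. f_equal. unfold IZC. rewrite <- positive_nat_Z, <- INR_IZR_INZ. auto.
  - rewrite Cpown_e, <- e_opp. f_equal. unfold IZC. rewrite <- Pos2Z.opp_pos, opp_IZR, <- positive_nat_Z, <- INR_IZR_INZ.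
    apply Cext; simpl; ring.
Qed.

Lemma pow_m1 n : (-1) ^ n = 1 \/ (-1) ^ n = -1.
Proof. induction n; simpl. auto. destruct IHn as [-> | ->]; [right|left]; ring. Qed.

Lemma Cnorm_sgn1 k : Cnorm (sgn1 k) = 1.
Proof.
  unfold sgn1. rewrite Cnorm_RtoC. destruct k; simpl. apply Rabs_R1.
  destruct (pow_m1 (Pos.to_nat p)) as [-> | ->]. apply Rabs_R1. rewrite Rabs_left by lra; lra.
  destruct (pow_m1 (Pos.to_nat p)) as [-> | ->]. rewrite Rinv_1. apply Rabs_R1.
  replace (/ -1) with (-1) by field. rewrite Rabs_left by lra; lra.
Qed.

Definition kk (m : nat) (n : Z) : Z := (Z.of_nat m * (n * (n + 1)) / 2)%Z.

Lemma kk_IZR m n : IZR (kk m n) = INR m * (IZR n * (IZR n + 1)) / 2.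
Proof.
  assert (exists j, (n * (n + 1) = 2 * j)%Z) as [j Hj].
  { destruct (Z.Even_or_Odd n) as [[a Ha]|[a Ha]]; subst.
    exists (a * (2 * a + 1))%Z; ring. exists ((2 * a + 1) * (a + 1))%Z; ring. }
  unfold kk. rewrite Hj. replace (Z.of_nat m * (2 * j))%Z with ((Z.of_nat m * j) * 2)%Z by ring.
  rewrite Z.div_mul by lia. rewrite mult_IZR, <- INR_IZR_INZ.
  replace (IZR n * (IZR n + 1)) with (IZR (n * (n + 1))) by (rewrite mult_IZR, plus_IZR; auto).
  rewrite Hj, mult_IZR. field.
Qed.

Lemma Cnorm_qpow tau k : Cnorm (Cpowz (e tau) k) = exp (- (2 * PI) * (IZR k * Im tau)).
Proof. rewrite Cpowz_e, Cnorm_e. f_equal. f_equal. simpl. ring. Qed.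

Definition ga : Cplx := Copp (mkC 0 (2 * PI)).
Definition bb tau z n : Cplx := Cmul (Cpowz (e tau) n) (e z).
Definition GG tau z n u : Cplx := Csub C1 (Cmul (bb tau z n) (Cexp (Cmul ga u))).

Lemma e_sub_Cexp z u : e (Csub z u) = Cmul (e z) (Cexp (Cmul ga u)).
Proof. unfold Csub. rewrite e_add, e_opp. f_equal. unfold e. rewrite Cexp_inv. f_equal. unfold ga. field. Qed.

Lemma GG_eq tau z n u : GG tau z n u = Csub C1 (Cmul (Cpowz (e tau) n) (e (Csub z u))).
Proof. unfold GG, bb. rewrite e_sub_Cexp. f_equal. field. Qed.

Lemma Cnorm_X tau z n u : Cnorm (Cmul (bb tau z n) (Cexp (Cmul ga u))) =
  exp (2 * PI * (Im u - Im z - IZR n * Im tau)).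
Proof.
  unfold bb. rewrite !Cnorm_mul, Cnorm_qpow, Cnorm_e, Cnorm_Cexp, <- !exp_plus. f_equal.
  unfold ga; simpl. ring.
Qed.

Lemma GG_zero_lattice tau z n u : GG tau z n u = C0 -> in_lattice tau z u.
Proof.
  rewrite GG_eq. intro H. assert (Cmul (Cpowz (e tau) n) (e (Csub z u)) = C1).
  { replace C1 with (Cadd (Csub C1 (Cmul (Cpowz (e tau) n) (e (Csub z u)))) (Cmul (Cpowz (e tau) n) (e (Csub z u)))) by field.
    rewrite H. field. }
  rewrite Cpowz_e, <- e_add in H0. apply e_eq1 in H0. destruct H0 as [k Hk].
  exists n, (- k)%Z. unfold IZC in *. rewrite opp_IZR.
  replace u with (Csub (Cadd (Cmul (IZC n) tau) z) (Cadd (Cmul (IZC n) tau) (Csub z u))) by field.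
  unfold IZC. rewrite Hk. apply Cext; simpl; ring.
Qed.

Lemma lattice_GG_zero tau z u : in_lattice tau z u -> exists n, GG tau z n u = C0.
Proof.
  intros [a [b ->]]. exists a. rewrite GG_eq, Cpowz_e, <- e_add.
  replace (Cadd (Cmul (IZC a) tau) (Csub z (Cadd z (Cadd (Cmul (IZC a) tau) (IZC b)))))
    with (IZC (- b)) by (unfold IZC; rewrite opp_IZR; apply Cext; simpl; ring).
  rewrite e_int. field.
Qed.

Lemma one_minus_lb X s a : 0 < a -> Cnorm X = exp s -> a <= Rabs s -> 1 - exp (- a) <= Cnorm (Csub C1 X).
Proof.
  intros Ha HX Hs. pose proof (exp_pos a). pose proof (exp_pos (-a)).
  assert (exp a * exp (- a) = 1) by (rewrite <- exp_plus; replace (a + - a) with 0 by ring; apply exp_0).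
  destruct (Rle_dec 0 s).
  - rewrite Rabs_right in Hs by lra. assert (exp a <= exp s).
    { destruct Hs. left; apply exp_increasing; auto. rewrite H2; lra. }
    pose proof (Cnorm_rev X C1). rewrite Cnorm_C1, Cnorm_sub_sym in H3.
    assert (0 <= (exp a - 1) * (exp a - 1) * exp (-a)) by (apply Rmult_le_pos; [apply Rle_0_sqr | lra]).
    assert ((exp a - 1) * (exp a - 1) * exp (-a) = exp a * (exp a * exp (-a)) - 2 * (exp a * exp (- a)) + exp (-a)) by ring.
    rewrite H1 in H5. lra.
  - rewrite Rabs_left in Hs by lra. assert (exp s <= exp (-a)).
    { destruct (Rle_lt_or_eq_dec s (-a)) as [H2|H2]. lra. left; apply exp_increasing; auto. rewrite H2; lra. }
    pose proof (Cnorm_rev C1 X). rewrite Cnorm_C1 in H3. lra.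
Qed.

Lemma Clim_Cexp a w : Clim (fun u => Cexp (Cmul a u)) w (Cexp (Cmul a w)).
Proof.
  apply (QB_Clim (fun u => Cexp (Cmul a u)) w (Cmul a (Cexp (Cmul a w))) (Cnorm (Cexp (Cmul a w)) * Kexp (Cnorm a * 1) * (Cnorm a * Cnorm a)) 1); [| | apply (QB_exp a w 1); lra].
  - apply Rmult_le_pos. apply Rmult_le_pos. apply Cnorm_ge0. apply Kexp_pos. pose proof (Cnorm_ge0 a); lra.
    pose proof (Cnorm_ge0 a); nra.
  - lra.
Qed.

Lemma Clim_GG tau z n w : Clim (GG tau z n) w (GG tau z n w).
Proof.
  unfold GG. unfold Csub. apply Clim_add. apply Clim_const.
  apply (Clim_ext (fun u => Cmul (Copp (bb tau z n)) (Cexp (Cmul ga u))) _ _ _ 1). lra.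
  intros; field.
  replace (Copp (Cmul (bb tau z n) (Cexp (Cmul ga w)))) with (Cmul (Copp (bb tau z n)) (Cexp (Cmul ga w))) by field.
  apply Clim_mul. apply Clim_const. apply Clim_Cexp.
Qed.

Lemma LB_local tau z w (P : Z -> bool) j : (forall n, P n = true -> GG tau z n w <> C0) ->
  exists rj dj, 0 < rj /\ 0 < dj /\ (P j = true -> forall u, Cnorm (Csub u w) < rj -> dj <= Cnorm (GG tau z j u)).
Proof.
  intro HP. destruct (P j) eqn:Pj.
  - specialize (HP j Pj). pose proof (Cnorm_gt0 _ HP).
    destruct (Clim_GG tau z j w (Cnorm (GG tau z j w) / 2)) as [d [Hd Hl]]. lra.
    exists d, (Cnorm (GG tau z j w) / 2). split; auto. split. lra. intros _ u Hu.
    destruct (Req_dec (Cnorm (Csub u w)) 0) as [E|E].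
    + apply Cnorm_eq0 in E. replace u with w by (replace u with (Cadd (Csub u w) w) by field; rewrite E; field). lra.
    + pose proof (Cnorm_ge0 (Csub u w)). specialize (Hl u ltac:(lra)).
      pose proof (Cnorm_rev (GG tau z j w) (GG tau z j u)). rewrite Cnorm_sub_sym in Hl. lra.
  - exists 1, 1. split. lra. split. lra. discriminate.
Qed.

Lemma LB tau z w (P : Z -> bool) : 0 < Im tau -> (forall n, P n = true -> GG tau z n w <> C0) ->
  exists r dl, 0 < r /\ 0 < dl /\ forall u, Cnorm (Csub u w) < r -> forall n, P n = true -> dl <= Cnorm (GG tau z n u).
Proof.
  intros Ht HP. set (t := Im tau) in *.
  set (y := (Im w - Im z) / t). set (N := Int_part y).
  destruct (base_Int_part y) as [Hy1 Hy2]. fold N in Hy1, Hy2.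
  destruct (LB_local tau z w P N HP) as [r1 [d1 [Hr1 [Hd1 H1]]]].
  destruct (LB_local tau z w P (N + 1)%Z HP) as [r2 [d2 [Hr2 [Hd2 H2]]]].
  set (d0 := 1 - exp (- (PI * t))).
  assert (Hd0 : 0 < d0).
  { unfold d0. assert (exp (- (PI * t)) < 1). rewrite <- exp_0. apply exp_increasing.
    pose proof PI_RGT_0. nra. lra. }
  exists (Rmin (t / 2) (Rmin r1 r2)), (Rmin d0 (Rmin d1 d2)).
  split. apply Rmin_pos. lra. apply Rmin_pos; auto.
  split. apply Rmin_pos; auto. apply Rmin_pos; auto.
  intros u Hu n Pn.
  pose proof (Rmin_l (t / 2) (Rmin r1 r2)). pose proof (Rmin_r (t / 2) (Rmin r1 r2)).
  pose proof (Rmin_l r1 r2). pose proof (Rmin_r r1 r2).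
  pose proof (Rmin_l d0 (Rmin d1 d2)). pose proof (Rmin_r d0 (Rmin d1 d2)).
  pose proof (Rmin_l d1 d2). pose proof (Rmin_r d1 d2).
  destruct (Z.eq_dec n N) as [->|HnN].
  { specialize (H1 Pn u ltac:(lra)). lra. }
  destruct (Z.eq_dec n (N + 1)) as [->|HnN1].
  { specialize (H2 Pn u ltac:(lra)). lra. }
  assert (Hfar : t <= Rabs (Im w - Im z - IZR n * t)).
  { replace (Im w - Im z - IZR n * t) with (t * (y - IZR n)) by (unfold y; field; lra).
    rewrite Rabs_mult, Rabs_right by lra.
    assert (1 <= Rabs (y - IZR n)).
    { destruct (Z_lt_le_dec n N).
      - assert (IZR n <= IZR N - 1) by (rewrite <- minus_IZR; apply IZR_le; lia).
        rewrite Rabs_right; lra.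
      - assert (IZR N + 2 <= IZR n) by (rewrite <- plus_IZR; apply IZR_le; lia).
        rewrite Rabs_left; lra. }
    nra. }
  assert (Him : Rabs (Im u - Im w) < t / 2).
  { pose proof (Im_le_Cnorm (Csub u w)) as HH. simpl in HH. unfold Rminus. lra. }
  unfold GG. eapply Rle_trans; [| apply (one_minus_lb _ (2 * PI * (Im u - Im z - IZR n * t)) (PI * t))].
  - fold d0. lra.
  - pose proof PI_RGT_0. nra.
  - apply Cnorm_X.
  - pose proof PI_RGT_0.
    replace (2 * PI * (Im u - Im z - IZR n * t)) with (2 * PI * ((Im w - Im z - IZR n * t) + (Im u - Im w))) by ring.
    rewrite Rabs_mult, (Rabs_right (2 * PI)) by lra.
    assert (t / 2 <= Rabs (Im w - Im z - IZR n * t + (Im u - Im w))).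
    { pose proof (Rabs_triang_inv (Im w - Im z - IZR n * t) (-(Im u - Im w))).
      replace (Im w - Im z - IZR n * t - - (Im u - Im w)) with (Im w - Im z - IZR n * t + (Im u - Im w)) in H10 by ring.
      rewrite Rabs_Ropp in H10. lra. }
    nra.
Qed.

Definition cc (m : nat) (eps : Z) (tau : Cplx) (n : Z) : Cplx :=
  Cmul (sgn1 (n * eps)) (Cpowz (e tau) (kk m n)).

Lemma Cnorm_cc m eps tau n :
  Cnorm (cc m eps tau n) = exp (- (2 * PI) * (INR m * (IZR n * (IZR n + 1)) / 2 * Im tau)).
Proof. unfold cc. rewrite Cnorm_mul, Cnorm_sgn1, Cnorm_qpow, kk_IZR. ring. Qed.

Lemma nn1_nonneg n : 0 <= IZR n * (IZR n + 1).
Proof.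
  destruct (Z_lt_le_dec n 0).
  - assert (IZR n <= -1) by (apply IZR_le; lia). nra.
  - assert (0 <= IZR n) by (apply IZR_le; lia). nra.
Qed.

Lemma weighted_series m eps tau f : (1 <= m)%nat -> 0 < Im tau -> EB f ->
  ex_series (fun k => Cnorm (cc m eps tau (Z.of_nat k)) * Rabs (f (Z.of_nat k))) /\
  ex_series (fun k => Cnorm (cc m eps tau (- Z.of_nat (S k))%Z) * Rabs (f (- Z.of_nat (S k))%Z)).
Proof.
  intros Hm Ht [C [A [HC [HA Hf]]]].
  set (c := PI * Im tau). assert (Hc : 0 < c) by (unfold c; pose proof PI_RGT_0; nra).
  assert (Hmr : 1 <= INR m) by (apply (le_INR 1); auto).
  assert (W : forall n, Cnorm (cc m eps tau n) <= exp (- c * (IZR n * (IZR n + 1)))).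
  { intro n. rewrite Cnorm_cc.
    assert (Hle : - (2 * PI) * (INR m * (IZR n * (IZR n + 1)) / 2 * Im tau) <= - c * (IZR n * (IZR n + 1))).
    { unfold c. pose proof PI_RGT_0. pose proof (nn1_nonneg n).
      assert (IZR n * (IZR n + 1) <= INR m * (IZR n * (IZR n + 1))) by nra.
      assert (PI * Im tau * (IZR n * (IZR n + 1)) <= PI * Im tau * (INR m * (IZR n * (IZR n + 1)))).
      { apply Rmult_le_compat_l; nra. }
      lra. }
    destruct Hle as [Hl|Hl]. left; apply exp_increasing; auto. rewrite Hl; lra. }
  pose proof (gauss_series A c HA Hc) as G.
  split.
  - apply (@ex_series_le R_AbsRing R_CompleteNormedModule _ (fun k => C * (A ^ k * exp (- c * (INR k * (INR k + 1)))))).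
    2: { eapply ex_series_ext; [|apply (@ex_series_scal_l R_AbsRing R_NormedModule C _ G)]. intro k. reflexivity. }
    intro k. change (norm ?x) with (Rabs x).
    rewrite Rabs_right. 2: { apply Rle_ge, Rmult_le_pos. apply Cnorm_ge0. apply Rabs_pos. }
    specialize (W (Z.of_nat k)). specialize (Hf (Z.of_nat k)).
    rewrite <- INR_IZR_INZ in W. rewrite Zabs2Nat.id in Hf.
    pose proof (Cnorm_ge0 (cc m eps tau (Z.of_nat k))). pose proof (Rabs_pos (f (Z.of_nat k))).
    pose proof (exp_pos (- c * (INR k * (INR k + 1)))).
    replace (C * (A ^ k * exp (- c * (INR k * (INR k + 1))))) with (exp (- c * (INR k * (INR k + 1))) * (C * A ^ k)) by ring.
    apply Rmult_le_compat; auto.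
  - apply (@ex_series_le R_AbsRing R_CompleteNormedModule _ (fun k => (C * A) * (A ^ k * exp (- c * (INR k * (INR k + 1)))))).
    2: { eapply ex_series_ext; [|apply (@ex_series_scal_l R_AbsRing R_NormedModule (C * A) _ G)]. intro k. reflexivity. }
    intro k. change (norm ?x) with (Rabs x).
    rewrite Rabs_right. 2: { apply Rle_ge, Rmult_le_pos. apply Cnorm_ge0. apply Rabs_pos. }
    specialize (W (- Z.of_nat (S k))%Z). specialize (Hf (- Z.of_nat (S k))%Z).
    replace (Z.abs_nat (- Z.of_nat (S k))) with (S k) in Hf by lia.
    rewrite opp_IZR, <- INR_IZR_INZ, S_INR in W.
    replace (- (INR k + 1) * (- (INR k + 1) + 1)) with (INR k * (INR k + 1)) in W by ring.
    pose proof (Cnorm_ge0 (cc m eps tau (- Z.of_nat (S k))%Z)). pose proof (Rabs_pos (f (- Z.of_nat (S k))%Z)).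
    pose proof (exp_pos (- c * (INR k * (INR k + 1)))).
    replace (C * A * (A ^ k * exp (- c * (INR k * (INR k + 1))))) with (exp (- c * (INR k * (INR k + 1))) * (C * A ^ (S k))) by (simpl; ring).
    apply Rmult_le_compat; auto.
Qed.

Definition EBC (f : Z -> Cplx) : Prop := EB (fun n => Cnorm (f n)).

Lemma EBC_add f g : EBC f -> EBC g -> EBC (fun n => Cadd (f n) (g n)).
Proof.
  intros H1 H2. apply (EB_pos_le (fun n => Cnorm (f n) + Cnorm (g n))).
  intro; split. apply Cnorm_ge0. apply Cnorm_add. apply EB_add; auto.
Qed.
Lemma EBC_mul f g : EBC f -> EBC g -> EBC (fun n => Cmul (f n) (g n)).
Proof.
  intros H1 H2. apply (EB_pos_le (fun n => Cnorm (f n) * Cnorm (g n))).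
  intro; rewrite Cnorm_mul; split; [apply Rmult_le_pos; apply Cnorm_ge0| lra]. apply EB_mul; auto.
Qed.
Lemma EBC_opp f : EBC f -> EBC (fun n => Copp (f n)).
Proof. intro H. unfold EBC. eapply EB_le; [|exact H]. intro n. rewrite Cnorm_opp. lra. Qed.
Lemma EBC_const c : EBC (fun _ => c).
Proof. apply (EB_const (Cnorm c)). Qed.
Lemma EBC_inv f dl : 0 < dl -> (forall n, dl <= Cnorm (f n)) -> EBC (fun n => Cinv (f n)).
Proof.
  intros Hd H. apply (EB_pos_le (fun _ => / dl)). 2: apply EB_const.
  intro n. rewrite Cnorm_inv. specialize (H n). split. left; apply Rinv_0_lt_compat; lra.
  apply Rinv_le_contravar; lra.
Qed.
Lemma EBC_ext f g : (forall n, f n = g n) -> EBC f -> EBC g.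
Proof. intros E H. unfold EBC in *. eapply EB_le; [|exact H]. intro n. cbv beta. rewrite E. lra. Qed.
Lemma EB_ext f g : (forall n, f n = g n) -> EB f -> EB g.
Proof. intros E H. eapply EB_le; [|exact H]. intro n. cbv beta. rewrite E. lra. Qed.
Lemma EB_Cnorm f : EBC f -> EB (fun n => Cnorm (f n)).
Proof. auto. Qed.

Definition al (m : nat) (n : Z) : Cplx :=
  Cmul (mkC 0 (2 * PI)) (Copp (Cmul (RtoC 2) (Cmul (Mval m) (IZC n)))).

Lemma Cnorm_al m n : Cnorm (al m n) = 2 * PI * INR m * IZR (Z.abs n).
Proof.
  unfold al. rewrite Cnorm_mul, Cnorm_opp.
  replace (Cmul (RtoC 2) (Cmul (Mval m) (IZC n))) with (RtoC (INR m * IZR n))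
    by (unfold Mval, IZC, RtoC; apply Cext; simpl; field).
  rewrite Cnorm_RtoC, Rabs_mult, abs_IZR, (Rabs_right (INR m)) by (apply Rle_ge, pos_INR).
  replace (Cnorm (mkC 0 (2 * PI))) with (2 * PI). ring.
  unfold Cnorm; simpl. replace (0 * 0 + 2 * PI * (2 * PI)) with ((2 * PI) * (2 * PI)) by ring.
  rewrite sqrt_square. auto. pose proof PI_RGT_0; lra.
Qed.

Lemma Re_le_Cnorm' x : Re x <= Cnorm x.
Proof. pose proof (Re_le_Cnorm x). pose proof (Rle_abs (Re x)). lra. Qed.

Lemma EB_al m : EB (fun n => Cnorm (al m n)).
Proof.
  apply (EB_ext (fun n => (2 * PI * INR m) * IZR (Z.abs n))).
  intro n. rewrite Cnorm_al. ring.
  apply EB_mul. apply EB_const. apply EB_absn.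
Qed.

Lemma EBC_Cexp_al m w : EBC (fun n => Cexp (Cmul (al m n) w)).
Proof.
  apply (EB_pos_le (fun n => exp ((2 * PI * INR m * Cnorm w) * IZR (Z.abs n) + 0))).
  2: { apply EB_exp. pose proof PI_RGT_0. pose proof (pos_INR m). pose proof (Cnorm_ge0 w).
       apply Rmult_le_pos; [|auto]. apply Rmult_le_pos; lra. }
  intro n. split. apply Cnorm_ge0. rewrite Cnorm_Cexp.
  destruct (Rle_lt_or_eq_dec _ _ (Rle_trans _ _ _ (Re_le_Cnorm' (Cmul (al m n) w))
      (Req_le _ _ (Cnorm_mul (al m n) w)))) as [H|H].
  - left. apply exp_increasing. rewrite Cnorm_al in H. lra.
  - rewrite H, Cnorm_al. right. f_equal. ring.
Qed.

Lemma EB_Kexp_al m r : 0 <= r -> EB (fun n => Kexp (Cnorm (al m n) * r)).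
Proof.
  intro Hr. unfold Kexp. apply EB_add. apply EB_mul. apply EB_const.
  apply (EB_ext (fun n => exp ((2 * PI * INR m * r) * IZR (Z.abs n) + 0))).
  intro n. rewrite Cnorm_al. f_equal. ring.
  apply EB_exp. pose proof PI_RGT_0. pose proof (pos_INR m). apply Rmult_le_pos; [|auto]. apply Rmult_le_pos; lra.
  apply EB_mul. apply EB_al. apply EB_const.
Qed.

Lemma EBC_bb tau z : EBC (fun n => bb tau z n).
Proof.
  apply (EB_pos_le (fun n => exp ((2 * PI * Rabs (Im tau)) * IZR (Z.abs n) + 0) * Cnorm (e z))).
  2: { apply EB_mul. apply EB_exp. pose proof PI_RGT_0. pose proof (Rabs_pos (Im tau)). nra. apply EB_const. }
  intro n. split. apply Cnorm_ge0. unfold bb. rewrite Cnorm_mul, Cnorm_qpow.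
  apply Rmult_le_compat_r. apply Cnorm_ge0.
  assert (- (2 * PI) * (IZR n * Im tau) <= 2 * PI * Rabs (Im tau) * IZR (Z.abs n) + 0).
  { rewrite abs_IZR. pose proof PI_RGT_0.
    assert (- (IZR n * Im tau) <= Rabs (IZR n) * Rabs (Im tau)).
    { rewrite <- Rabs_mult. rewrite <- Rabs_Ropp. apply Rle_abs. }
    nra. }
  destruct H. left; apply exp_increasing; auto. rewrite H; lra.
Qed.

Lemma Cinv_mul a b : Cinv (Cmul a b) = Cmul (Cinv a) (Cinv b).
Proof.
  assert (Z0 : Cinv C0 = C0) by (apply Cext; unfold Cinv, C0, RtoC; simpl; unfold Rdiv; ring).
  destruct (Req_dec (Cnorm a) 0) as [Ha|Ha].
  { apply Cnorm_eq0 in Ha. rewrite Ha. replace (Cmul C0 b) with C0 by field. rewrite Z0. apply Cext; simpl; ring. }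
  destruct (Req_dec (Cnorm b) 0) as [Hb|Hb].
  { apply Cnorm_eq0 in Hb. rewrite Hb. replace (Cmul a C0) with C0 by field. rewrite Z0. apply Cext; simpl; ring. }
  assert (a <> C0) by (intro E; rewrite E in Ha; apply Ha, Cnorm_C0).
  assert (b <> C0) by (intro E; rewrite E in Hb; apply Hb, Cnorm_C0).
  field. auto.
Qed.

Definition PP m tau z n u : Cplx := Cmul (Cexp (Cmul (al m n) u)) (Cinv (GG tau z n u)).
Definition Fm m tau z (P : Z -> bool) n u : Cplx := if P n then PP m tau z n u else C0.

Lemma EBC_al m : EBC (fun n => al m n).
Proof. apply EB_al. Qed.
Ltac ebc := repeat first [ assumption | apply EBC_al | apply EBC_Cexp_al | apply EBC_bb | apply EBC_const
  | apply EBC_add | apply EBC_mul | apply EBC_opp ].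
Ltac ebr := repeat first [ assumption | apply EB_const | (apply EB_Kexp_al; lra) | (apply EB_Cnorm; ebc)
  | apply EB_add | apply EB_mul ].

Lemma FAM m tau z w r dl (P : Z -> bool) : 0 < r -> 0 < dl ->
  (forall u, Cnorm (Csub u w) < r -> forall n, P n = true -> dl <= Cnorm (GG tau z n u)) ->
  exists (d : Z -> Cplx) (K : Z -> R),
    (forall n, QB (Fm m tau z P n) w (d n) (K n) r) /\ (forall n, 0 <= K n) /\
    EBC d /\ EB K /\ EBC (fun n => Fm m tau z P n w).
Proof.
  intros Hr Hdl HLB.
  assert (Hw : Cnorm (Csub w w) < r) by (replace (Csub w w) with C0 by field; rewrite Cnorm_C0; lra).
  set (IG := fun n => if P n then Cinv (GG tau z n w) else C0).
  assert (HIG : EBC IG).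
  { apply (EB_pos_le (fun _ => / dl)). 2: apply EB_const. intro n. split. apply Cnorm_ge0.
    unfold IG. destruct (P n) eqn:Pn. rewrite Cnorm_inv. apply Rinv_le_contravar; auto.
    rewrite Cnorm_C0. left; apply Rinv_0_lt_compat; auto. }
  set (EW := fun n => Cexp (Cmul (al m n) w)).
  set (dE := fun n => Cmul (al m n) (EW n)).
  set (KE := fun n => Cnorm (EW n) * Kexp (Cnorm (al m n) * r) * (Cnorm (al m n) * Cnorm (al m n))).
  set (dG := fun n => Cadd C0 (Cmul (Copp (bb tau z n)) (Cmul ga (Cexp (Cmul ga w))))).
  set (KG := fun n => 0 + Cnorm (Copp (bb tau z n)) * (Cnorm (Cexp (Cmul ga w)) * Kexp (Cnorm ga * r) * (Cnorm ga * Cnorm ga))).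
  set (dI := fun n => Copp (Cmul (dG n) (Cmul (IG n) (IG n)))).
  set (KI := fun n => QBinvK (KG n) (Cnorm (dG n)) 0 dl r).
  set (dP := fun n => Cadd (Cmul (dE n) (IG n)) (Cmul (EW n) (dI n))).
  set (KP := fun n => QBmulK (KE n) (KI n) (Cnorm (dE n)) (Cnorm (dI n)) (Cnorm (EW n)) (Cnorm (IG n)) r).
  assert (KE0 : forall n, 0 <= KE n).
  { intro n. unfold KE. pose proof (Cnorm_ge0 (al m n)). apply Rmult_le_pos. apply Rmult_le_pos.
    apply Cnorm_ge0. apply Kexp_pos. nra. nra. }
  assert (KG0 : forall n, 0 <= KG n).
  { intro n. unfold KG. pose proof (Cnorm_ge0 ga). pose proof (Cnorm_ge0 (Copp (bb tau z n))).
    pose proof (Cnorm_ge0 (Cexp (Cmul ga w))). pose proof (Kexp_pos (Cnorm ga * r) ltac:(nra)).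
    assert (0 <= Cnorm (Cexp (Cmul ga w)) * Kexp (Cnorm ga * r) * (Cnorm ga * Cnorm ga)).
    { apply Rmult_le_pos. apply Rmult_le_pos; auto. nra. }
    nra. }
  assert (KI0 : forall n, 0 <= KI n).
  { intro n. unfold KI, QBinvK. pose proof (KG0 n). pose proof (Cnorm_ge0 (dG n)).
    apply Rplus_le_le_0_compat.
    - unfold Rdiv. apply Rmult_le_pos. auto. left; apply Rinv_0_lt_compat; nra.
    - unfold Rdiv. apply Rmult_le_pos. apply Rmult_le_pos; auto; nra.
      left; apply Rinv_0_lt_compat; repeat apply Rmult_lt_0_compat; lra. }
  assert (KP0 : forall n, 0 <= KP n).
  { intro n. unfold KP, QBmulK. pose proof (KE0 n). pose proof (KI0 n).
    pose proof (Cnorm_ge0 (dE n)). pose proof (Cnorm_ge0 (dI n)). pose proof (Cnorm_ge0 (EW n)).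
    pose proof (Cnorm_ge0 (IG n)).
    assert (0 <= KE n * Cnorm (IG n)) by nra. assert (0 <= Cnorm (EW n) * KI n) by nra.
    assert (0 <= (Cnorm (dE n) + KE n * r) * (Cnorm (dI n) + KI n * r)) by (apply Rmult_le_pos; nra).
    lra. }
  exists (fun n => if P n then dP n else C0), (fun n => if P n then KP n else 0).
  split; [|split; [|split; [|split]]].
  - intro n. unfold Fm. destruct (P n) eqn:Pn.
    2: { apply QB_const. }
    assert (HG : QB (GG tau z n) w (dG n) (KG n) r).
    { apply (QB_ext (fun u => Cadd C1 (Cmul (Copp (bb tau z n)) (Cexp (Cmul ga u))))).
      intro u; unfold GG; field.
      apply QB_add. apply QB_const. apply QB_scal. apply QB_exp. lra. }
    assert (HI : QB (fun u => Cinv (GG tau z n u)) w (dI n) (KI n) r).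
    { assert (IGn : IG n = Cinv (GG tau z n w)) by (unfold IG; rewrite Pn; auto).
      unfold dI. rewrite IGn, <- Cinv_mul. unfold KI.
      change (QBinvK (KG n) (Cnorm (dG n)) 0 dl r) with (QBinvK (KG n) (Cnorm (dG n)) (Cnorm (GG tau z n w)) dl r).
      apply QB_inv; auto. }
    assert (HE : QB (fun u => Cexp (Cmul (al m n) u)) w (dE n) (KE n) r) by (apply QB_exp; lra).
    assert (IGn : IG n = Cinv (GG tau z n w)) by (unfold IG; rewrite Pn; auto).
    unfold PP. unfold dP, KP. rewrite IGn.
    apply (QB_mul (fun u => Cexp (Cmul (al m n) u)) (fun u => Cinv (GG tau z n u))); auto.
  - intro n. destruct (P n). apply KP0. lra.
  - apply (EB_pos_le (fun n => Cnorm (dP n))).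
    { intro n. destruct (P n). split. apply Cnorm_ge0. lra. rewrite Cnorm_C0. split. lra. apply Cnorm_ge0. }
    unfold dP, dI, dG, dE, EW. ebc.
  - apply (EB_pos_le KP).
    { intro n. destruct (P n). split. apply KP0. lra. split. lra. apply KP0. }
    unfold KP, QBmulK, KI, QBinvK, KG, KE, dE, dI, dG, EW. unfold Rdiv. ebr.
  - apply (EB_pos_le (fun n => Cnorm (Cmul (EW n) (IG n)))).
    { intro n. unfold Fm, IG, PP, EW. destruct (P n). split. apply Cnorm_ge0. lra.
      rewrite Cnorm_C0. split. lra. apply Cnorm_ge0. }
    unfold EW. apply EB_Cnorm. ebc.
Qed.

Definition summand m eps tau z (n : Z) (u : Cplx) : Cplx :=
  Cdiv
    (Cmul (sgn1 (n * eps)%Z)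
       (Cmul (e (Copp (Cmul (RtoC 2) (Cmul (Mval m) (Cmul (IZC n) u)))))
             (Cpowz (e tau) (Z.of_nat m * (n * (n + 1)) / 2)%Z)))
    (Csub C1 (Cmul (Cpowz (e tau) n) (e (Csub z u)))).

Lemma F_summand m eps tau z u : F m eps tau z u = Cmul (e (Cmul (Mval m) (Csub z u))) (Zsum (fun n => summand m eps tau z n u)).
Proof. reflexivity. Qed.

Lemma summand_eq m eps tau z n u : summand m eps tau z n u = Cmul (cc m eps tau n) (PP m tau z n u).
Proof.
  unfold summand, cc, PP, Cdiv. rewrite <- GG_eq. fold (kk m n).
  replace (e (Copp (Cmul (RtoC 2) (Cmul (Mval m) (Cmul (IZC n) u))))) with (Cexp (Cmul (al m n) u)).
  ring. unfold e, al. f_equal. field.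
Qed.

Definition Ptrue : Z -> bool := fun _ => true.

Lemma F_eq m eps tau z u : F m eps tau z u =
  Cmul (e (Cmul (Mval m) (Csub z u))) (Zsum (fun n => Cmul (cc m eps tau n) (Fm m tau z Ptrue n u))).
Proof.
  rewrite F_summand. f_equal. f_equal. apply functional_extensionality. intro n.
  rewrite summand_eq. reflexivity.
Qed.

Lemma QB_deriv_lim f w d K r : 0 <= K -> 0 < r -> QB f w d K r ->
  Clim (fun u => Cdiv (Csub (f u) (f w)) (Csub u w)) w d.
Proof.
  intros HK Hr H. intros eps He.
  exists (Rmin r (eps / (K + 1))). split. apply Rmin_pos; auto. apply Rdiv_lt_0_compat; lra.
  intros u [Hu1 Hu2]. pose proof (Rmin_l r (eps / (K + 1))). pose proof (Rmin_r r (eps / (K + 1))).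
  specialize (H u ltac:(lra)).
  assert (Hz : Csub u w <> C0) by (intro E; rewrite E, Cnorm_C0 in Hu1; lra).
  replace (Csub (Cdiv (Csub (f u) (f w)) (Csub u w)) d) with
    (Cdiv (Csub (Csub (f u) (f w)) (Cmul d (Csub u w))) (Csub u w)) by (field; auto).
  rewrite Cnorm_div. apply (Rmult_lt_reg_r (Cnorm (Csub u w))); auto.
  unfold Rdiv. rewrite Rmult_assoc, Rinv_l by lra. rewrite Rmult_1_r.
  assert (Cnorm (Csub u w) * (K + 1) < eps).
  { apply (Rmult_lt_reg_r (/ (K + 1))). apply Rinv_0_lt_compat; lra.
    rewrite Rmult_assoc, Rinv_r by lra. unfold Rdiv in H1. lra. }
  nra.
Qed.

Lemma QB_eaff c a w r : 0 <= r -> exists d K, 0 <= K /\ QB (fun u => Cmul c (Cexp (Cmul a u))) w d K r.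
Proof.
  intro Hr. eexists. eexists. split. 2: apply QB_scal, QB_exp; auto.
  apply Rmult_le_pos. apply Cnorm_ge0. apply Rmult_le_pos. apply Rmult_le_pos. apply Cnorm_ge0.
  apply Kexp_pos. pose proof (Cnorm_ge0 a); nra. pose proof (Cnorm_ge0 a); nra.
Qed.

Definition pre m z u := e (Cmul (Mval m) (Csub z u)).
Lemma pre_eq m z u : pre m z u = Cmul (e (Cmul (Mval m) z)) (Cexp (Cmul (Copp (Cmul (mkC 0 (2 * PI)) (Mval m))) u)).
Proof. unfold pre. replace (Cmul (Mval m) (Csub z u)) with (Cadd (Cmul (Mval m) z) (Copp (Cmul (Mval m) u))) by field.
  rewrite e_add. f_equal. unfold e. f_equal. field. Qed.

Lemma QB_pre m z w r : 0 <= r -> exists d K, 0 <= K /\ QB (pre m z) w d K r.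
Proof.
  intro Hr. destruct (QB_eaff (e (Cmul (Mval m) z)) (Copp (Cmul (mkC 0 (2 * PI)) (Mval m))) w r Hr) as [d [K [HK H]]].
  exists d, K. split; auto. apply (QB_ext _ _ _ _ _ _ (fun u => eq_sym (pre_eq m z u))). auto.
Qed.

Lemma SER m eps tau z w r dl (P : Z -> bool) : (1 <= m)%nat -> 0 < Im tau -> 0 < r -> 0 < dl ->
  (forall u, Cnorm (Csub u w) < r -> forall n, P n = true -> dl <= Cnorm (GG tau z n u)) ->
  (forall u, Cnorm (Csub u w) < r ->
     Zseries_lim (fun n => Cmul (cc m eps tau n) (Fm m tau z P n u)) (Zsum (fun n => Cmul (cc m eps tau n) (Fm m tau z P n u)))) /\
  exists D KK, 0 <= KK /\ QB (fun u => Zsum (fun n => Cmul (cc m eps tau n) (Fm m tau z P n u))) w D KK r.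
Proof.
  intros Hm Ht Hr Hdl HLB.
  destruct (FAM m tau z w r dl P Hr Hdl HLB) as [d [K [HQ [HK [Hd [HKe Hw]]]]]].
  assert (Hconv : forall u, Cnorm (Csub u w) < r ->
     Zseries_lim (fun n => Cmul (cc m eps tau n) (Fm m tau z P n u)) (Zsum (fun n => Cmul (cc m eps tau n) (Fm m tau z P n u)))).
  { intros u Hu.
    set (B := fun n => Cnorm (Fm m tau z P n w) + (Cnorm (d n) + K n * r) * r).
    assert (HB : EB B).
    { unfold B. apply EB_add. auto. apply EB_mul. apply EB_add. auto. apply EB_mul; auto. apply EB_const. apply EB_const. }
    destruct (weighted_series m eps tau B Hm Ht HB) as [S1 S2].
    destruct (Zseries_maj (fun n => Cmul (cc m eps tau n) (Fm m tau z P n u)) (fun n => Cnorm (cc m eps tau n) * Rabs (B n))) as [l Hl].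
    { intro n. rewrite Cnorm_mul. apply Rmult_le_compat_l. apply Cnorm_ge0.
      eapply Rle_trans. apply (QB_bound _ w (d n) (K n) r); auto. apply Rle_abs. }
    exact S1. exact S2.
    rewrite (Zsum_eq _ _ Hl). auto. }
  split; auto.
  destruct (weighted_series m eps tau K Hm Ht HKe) as [K1 K2].
  destruct (weighted_series m eps tau (fun n => Cnorm (d n)) Hm Ht Hd) as [D1 D2].
  destruct (Zseries_maj (fun n => Cmul (cc m eps tau n) (d n)) (fun n => Cnorm (cc m eps tau n) * Rabs (Cnorm (d n)))) as [D HD].
  { intro n. rewrite Cnorm_mul. rewrite (Rabs_right (Cnorm (d n))) by (apply Rle_ge, Cnorm_ge0). lra. }
  exact D1. exact D2.
  set (KK := fun n => Cnorm (cc m eps tau n) * K n).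
  exists D, (Series (fun k => KK (Z.of_nat k)) + Series (fun k => KK (- Z.of_nat (S k))%Z)).
  assert (HKK : forall n, 0 <= KK n) by (intro n; unfold KK; apply Rmult_le_pos; [apply Cnorm_ge0|auto]).
  assert (E1 : ex_series (fun k => KK (Z.of_nat k))).
  { eapply ex_series_ext; [|exact K1]. intro k. unfold KK. rewrite Rabs_right; auto. apply Rle_ge; auto. }
  assert (E2 : ex_series (fun k => KK (- Z.of_nat (S k))%Z)).
  { eapply ex_series_ext; [|exact K2]. intro k. unfold KK. rewrite Rabs_right; auto. apply Rle_ge; auto. }
  split.
  - apply Rplus_le_le_0_compat; (eapply Rle_trans; [|apply (sum_le_Series _ 0)]; [simpl; auto | intro; auto | auto]).
  - apply (QB_Zseries (fun n u => Cmul (cc m eps tau n) (Fm m tau z P n u)) (fun n => Cmul (cc m eps tau n) (d n)) KK); auto.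
    intro n. apply QB_scal. auto.
Qed.

Lemma QBmulK_nonneg K1 K2 n1 n2 a b r : 0 <= K1 -> 0 <= K2 -> 0 <= n1 -> 0 <= n2 -> 0 <= a -> 0 <= b -> 0 <= r ->
  0 <= QBmulK K1 K2 n1 n2 a b r.
Proof. intros. unfold QBmulK. assert (0 <= K1 * b) by nra. assert (0 <= a * K2) by nra.
  assert (0 <= (n1 + K1 * r) * (n2 + K2 * r)) by (apply Rmult_le_pos; nra). lra. Qed.

Lemma QB_F m eps tau z w r dl : (1 <= m)%nat -> 0 < Im tau -> 0 < r -> 0 < dl ->
  (forall u, Cnorm (Csub u w) < r -> forall n, Ptrue n = true -> dl <= Cnorm (GG tau z n u)) ->
  exists d K, 0 <= K /\ QB (F m eps tau z) w d K r.
Proof.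
  intros Hm Ht Hr Hdl HLB.
  destruct (SER m eps tau z w r dl Ptrue Hm Ht Hr Hdl HLB) as [_ [D [KK [HKK HS]]]].
  destruct (QB_pre m z w r ltac:(lra)) as [d1 [K1 [HK1 H1]]].
  eexists. eexists. split.
  2: { apply (QB_ext (fun u => Cmul (pre m z u) (Zsum (fun n => Cmul (cc m eps tau n) (Fm m tau z Ptrue n u))))).
       intro u. rewrite F_eq. reflexivity.
       exact (QB_mul (pre m z) (fun u => Zsum (fun n => Cmul (cc m eps tau n) (Fm m tau z Ptrue n u))) w d1 D K1 KK r HK1 HKK H1 HS). }
  apply QBmulK_nonneg; auto using Cnorm_ge0; lra.
Qed.

Lemma not_lattice_GG tau z w : ~ in_lattice tau z w -> forall n, Ptrue n = true -> GG tau z n w <> C0.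
Proof. intros H n _ E. apply H. eapply GG_zero_lattice; eauto. Qed.

Lemma diff_at m eps tau z w : (1 <= m)%nat -> 0 < Im tau -> ~ in_lattice tau z w ->
  C_differentiable_at (F m eps tau z) w.
Proof.
  intros Hm Ht Hw. destruct (LB tau z w Ptrue Ht (not_lattice_GG tau z w Hw)) as [r [dl [Hr [Hdl HLB]]]].
  destruct (QB_F m eps tau z w r dl Hm Ht Hr Hdl HLB) as [d [K [HK H]]].
  apply (QB_diff _ w d K r); auto.
Qed.

Lemma holo m eps tau z p : (1 <= m)%nat -> 0 < Im tau -> ~ in_lattice tau z p ->
  holomorphic_at (fun u => F m eps tau z u) p.
Proof.
  intros Hm Ht Hp. destruct (LB tau z p Ptrue Ht (not_lattice_GG tau z p Hp)) as [r [dl [Hr [Hdl HLB]]]].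
  exists r. split; auto. intros w Hw. apply diff_at; auto.
  intro HL. destruct (lattice_GG_zero tau z w HL) as [n Hn].
  specialize (HLB w Hw n eq_refl). rewrite Hn, Cnorm_C0 in HLB. lra.
Qed.

Lemma sgn1_add a b : sgn1 (a + b) = Cmul (sgn1 a) (sgn1 b).
Proof. unfold sgn1. rewrite powerRZ_add by lra. apply Cext; simpl; ring. Qed.

Lemma powerRZ_m1_sq k : powerRZ (-1) k * powerRZ (-1) k = 1.
Proof.
  destruct k; simpl. ring.
  destruct (pow_m1 (Pos.to_nat p)) as [-> | ->]; ring.
  destruct (pow_m1 (Pos.to_nat p)) as [-> | ->]; field.
Qed.

Lemma sgn1_even k : sgn1 (2 * k) = C1.
Proof.
  replace (2 * k)%Z with (k + k)%Z by ring. rewrite sgn1_add. unfold sgn1.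
  apply Cext; simpl. rewrite powerRZ_m1_sq. ring. ring.
Qed.

Lemma sgn1_shift a k : sgn1 (a + 2 * k) = sgn1 a.
Proof. rewrite sgn1_add, sgn1_even. field. Qed.

Lemma e_shift_int x k : e (Cadd x (IZC k)) = e x.
Proof. rewrite e_add, e_int. field. Qed.

Lemma Cpowz_as_e tau k : Cpowz (e tau) k = e (Cmul (IZC k) tau).
Proof. apply Cpowz_e. Qed.


Lemma denom_shift tau z n lam mu u :
  Cmul (Cpowz (e tau) n) (e (Csub z (Cadd u (Cadd (Cmul (IZC lam) tau) (IZC mu))))) =
  Cmul (Cpowz (e tau) (n - lam)) (e (Csub z u)).
Proof.
  rewrite !Cpowz_e, <- !e_add.
  rewrite <- (e_shift_int (Cadd (Cmul (IZC (n - lam)) tau) (Csub z u)) (- mu)).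
  f_equal. unfold IZC, RtoC. apply Cext; simpl; rewrite ?minus_IZR, ?opp_IZR; ring.
Qed.

Lemma num_shift m eps tau z n lam mu u :
  Cmul (pre m z (Cadd u (Cadd (Cmul (IZC lam) tau) (IZC mu))))
   (Cmul (sgn1 (n * eps)) (Cmul (e (Copp (Cmul (RtoC 2) (Cmul (Mval m) (Cmul (IZC n) (Cadd u (Cadd (Cmul (IZC lam) tau) (IZC mu))))))))
      (Cpowz (e tau) (Z.of_nat m * (n * (n + 1)) / 2)%Z)))
  = Cmul (Cmul (sgn1 (Z.of_nat m * mu + lam * eps)%Z)
             (e (Copp (Cmul (Mval m) (Cadd (Cmul (IZC (lam * lam)) tau) (Cmul (RtoC 2) (Cmul (IZC lam) u)))))))
     (Cmul (pre m z u) (Cmul (sgn1 ((n - lam) * eps)) (Cmul (e (Copp (Cmul (RtoC 2) (Cmul (Mval m) (Cmul (IZC (n - lam)) u)))))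
      (Cpowz (e tau) (Z.of_nat m * ((n - lam) * ((n - lam) + 1)) / 2)%Z)))).
Proof.
  change (Z.of_nat m * (n * (n + 1)) / 2)%Z with (kk m n).
  change (Z.of_nat m * ((n - lam) * ((n - lam) + 1)) / 2)%Z with (kk m (n - lam)).
  rewrite !Cpowz_e. unfold pre.
  set (u' := Cadd u (Cadd (Cmul (IZC lam) tau) (IZC mu))).
  set (XL := Cadd (Cadd (Cmul (Mval m) (Csub z u')) (Copp (Cmul (RtoC 2) (Cmul (Mval m) (Cmul (IZC n) u')))))
                  (Cmul (IZC (kk m n)) tau)).
  set (XR := Cadd (Cadd (Copp (Cmul (Mval m) (Cadd (Cmul (IZC (lam * lam)) tau) (Cmul (RtoC 2) (Cmul (IZC lam) u)))))
                        (Cmul (Mval m) (Csub z u)))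
                  (Cadd (Copp (Cmul (RtoC 2) (Cmul (Mval m) (Cmul (IZC (n - lam)) u)))) (Cmul (IZC (kk m (n - lam))) tau))).
  transitivity (Cmul (sgn1 (n * eps)) (e XL)).
  { unfold XL. rewrite !e_add. ring. }
  transitivity (Cmul (Cmul (sgn1 (Z.of_nat m * mu + lam * eps)%Z) (sgn1 ((n - lam) * eps))) (e XR)).
  2: { unfold XR. rewrite !e_add. ring. }
  set (j := (- (Z.of_nat m * mu * (2 * n + 1)))%Z).
  assert (EX : XL = Cadd XR (RtoC (IZR j / 2))).
  { assert (Hj : IZR j = - (INR m * IZR mu * (2 * IZR n + 1))).
    { unfold j. rewrite opp_IZR, !mult_IZR, plus_IZR, mult_IZR, <- INR_IZR_INZ. ring. }
    rewrite Hj. unfold XL, XR, u', Mval, IZC, RtoC. apply Cext; simpl; rewrite !kk_IZR;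
    rewrite ?opp_IZR, ?mult_IZR, ?plus_IZR, ?minus_IZR, <- ?INR_IZR_INZ; field. }
  rewrite EX, e_add, e_half.
  rewrite <- !sgn1_add.
  replace (Cmul (sgn1 (n * eps)) (Cmul (e XR) (sgn1 j))) with (Cmul (sgn1 (n * eps + j)) (e XR))
    by (rewrite sgn1_add; ring).
  f_equal.
  replace (n * eps + j)%Z with ((Z.of_nat m * mu + lam * eps + (n - lam) * eps) + 2 * (- (Z.of_nat m * mu * (n + 1))))%Z
    by (unfold j; ring).
  apply sgn1_shift.
Qed.

Lemma conv_at m eps tau z u : (1 <= m)%nat -> 0 < Im tau -> ~ in_lattice tau z u ->
  Zseries_lim (fun n => summand m eps tau z n u) (Zsum (fun n => summand m eps tau z n u)).
Proof.
  intros Hm Ht Hu. destruct (LB tau z u Ptrue Ht (not_lattice_GG tau z u Hu)) as [r [dl [Hr [Hdl HLB]]]].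
  destruct (SER m eps tau z u r dl Ptrue Hm Ht Hr Hdl HLB) as [Hc _].
  assert (Hu0 : Cnorm (Csub u u) < r) by (replace (Csub u u) with C0 by field; rewrite Cnorm_C0; lra).
  specialize (Hc u Hu0).
  assert (H : Zseries_lim (fun n => summand m eps tau z n u)
     (Zsum (fun n => Cmul (cc m eps tau n) (Fm m tau z Ptrue n u)))).
  { eapply Zseries_ext; [|exact Hc]. intro n. rewrite summand_eq. reflexivity. }
  rewrite (Zsum_eq _ _ H). auto.
Qed.

Lemma pre_neq0 m z u : pre m z u <> C0.
Proof. apply e_neq0. Qed.

Lemma quasi m eps tau z lam mu u : (1 <= m)%nat -> 0 < Im tau -> ~ in_lattice tau z u ->
  F m eps tau z (Cadd u (Cadd (Cmul (IZC lam) tau) (IZC mu))) =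
     Cmul (sgn1 (Z.of_nat m * mu + lam * eps)%Z)
       (Cmul (e (Copp (Cmul (Mval m)
                 (Cadd (Cmul (IZC (lam * lam)) tau) (Cmul (RtoC 2) (Cmul (IZC lam) u))))))
             (F m eps tau z u)).
Proof.
  intros Hm Ht Hu.
  set (u' := Cadd u (Cadd (Cmul (IZC lam) tau) (IZC mu))).
  set (fac := Cmul (sgn1 (Z.of_nat m * mu + lam * eps)%Z)
       (e (Copp (Cmul (Mval m) (Cadd (Cmul (IZC (lam * lam)) tau) (Cmul (RtoC 2) (Cmul (IZC lam) u))))))).
  pose proof (conv_at m eps tau z u Hm Ht Hu) as H1.
  set (S := Zsum (fun n => summand m eps tau z n u)) in *.
  pose proof (Zseries_scal (pre m z u) _ _ H1) as H2.
  pose proof (Zseries_shift lam _ _ H2) as H3. simpl in H3.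
  pose proof (Zseries_scal fac _ _ H3) as H4.
  pose proof (Zseries_scal (Cinv (pre m z u')) _ _ H4) as H5.
  assert (H6 : Zseries_lim (fun n => summand m eps tau z n u') (Cmul (Cinv (pre m z u')) (Cmul fac (Cmul (pre m z u) S)))).
  { eapply Zseries_ext; [|exact H5]. intro n. cbv beta.
    pose proof (pre_neq0 m z u').
    assert (Cmul (pre m z u') (summand m eps tau z n u') = Cmul fac (Cmul (pre m z u) (summand m eps tau z (n - lam) u))).
    { unfold summand, Cdiv. unfold u'. rewrite denom_shift.
      set (D := Cinv (Csub C1 (Cmul (Cpowz (e tau) (n - lam)) (e (Csub z u))))).
      transitivity (Cmul (Cmul (pre m z (Cadd u (Cadd (Cmul (IZC lam) tau) (IZC mu))))
       (Cmul (sgn1 (n * eps)) (Cmul (e (Copp (Cmul (RtoC 2) (Cmul (Mval m) (Cmul (IZC n) (Cadd u (Cadd (Cmul (IZC lam) tau) (IZC mu))))))))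
      (Cpowz (e tau) (Z.of_nat m * (n * (n + 1)) / 2)%Z)))) D). ring.
      rewrite num_shift. unfold fac. ring. }
    rewrite <- H0. field. auto. }
  rewrite (F_summand m eps tau z u'). rewrite (Zsum_eq _ _ H6).
  rewrite (F_summand m eps tau z u). fold S.
  change (e (Cmul (Mval m) (Csub z u'))) with (pre m z u').
  change (e (Cmul (Mval m) (Csub z u))) with (pre m z u).
  pose proof (pre_neq0 m z u'). unfold fac. field. auto.
Qed.

Definition P0 : Z -> bool := fun n => negb (Z.eqb n 0).

Lemma GG_z_neq0 tau z n : 0 < Im tau -> P0 n = true -> GG tau z n z <> C0.
Proof.
  intros Ht Hn E. unfold GG in E.
  assert (X1 : Cmul (bb tau z n) (Cexp (Cmul ga z)) = C1).
  { replace C1 with (Cadd (Csub C1 (Cmul (bb tau z n) (Cexp (Cmul ga z)))) (Cmul (bb tau z n) (Cexp (Cmul ga z)))) by field.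
    rewrite E. field. }
  pose proof (Cnorm_X tau z n z). rewrite X1, Cnorm_C1 in H.
  replace (2 * PI * (Im z - Im z - IZR n * Im tau)) with (- (2 * PI * Im tau) * IZR n) in H by ring.
  apply (f_equal ln) in H. rewrite ln_1, ln_exp in H.
  unfold P0 in Hn. destruct (Z.eqb_spec n 0) as [Hn0|Hn0]. discriminate.
  assert (IZR n <> 0) by (apply not_0_IZR; auto). pose proof PI_RGT_0.
  assert (2 * PI * Im tau <> 0) by nra.
  symmetry in H. apply Rmult_integral in H. destruct H as [H|H]. lra. auto.
Qed.

Lemma delta_series x : Zseries_lim (fun n => if Z.eqb n 0 then x else C0) x.
Proof.
  exists x, C0. split; [|split].
  - intros eps He. exists O. intros n Hn.
    assert (psum (fun k => if Z.eqb (Z.of_nat k) 0 then x else C0) n = x).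
    { induction n. reflexivity. simpl. rewrite IHn by lia.
      destruct (Z.eqb_spec (Z.pos (Pos.of_succ_nat n)) 0). lia. field. }
    rewrite H. replace (Csub x x) with C0 by field. rewrite Cnorm_C0. auto.
  - intros eps He. exists O. intros n Hn.
    match goal with |- context [psum ?f n] => rewrite (psum_ext f (fun _ => C0)) end.
    2: { intro k. reflexivity. }
    assert (forall n, psum (fun _ => C0) n = C0).
    { intro n0. induction n0. reflexivity. simpl. rewrite IHn0. field. }
    rewrite H. replace (Csub C0 C0) with C0 by field. rewrite Cnorm_C0. auto.
  - field.
Qed.

Lemma cc_0 m eps tau : cc m eps tau 0 = C1.
Proof. unfold cc, kk. rewrite Z.mul_0_l. simpl. rewrite Z.mul_0_r. simpl. apply Cext; simpl; ring. Qed.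

Lemma al_0 m : al m 0 = C0.
Proof. unfold al, IZC, Mval, RtoC. apply Cext; simpl; ring. Qed.

Lemma Cinv_inv h : h <> C0 -> Cinv (Cinv h) = h.
Proof. intro H. field. split; auto. intro E; injection E; intros; lra. Qed.

Lemma Clim_val f p l l' : Clim f p l -> l = l' -> Clim f p l'.
Proof. intros H <-. auto. Qed.

Lemma Clim_e c0 c1 w : Clim (fun v => e (Cadd c0 (Cmul c1 v))) w (e (Cadd c0 (Cmul c1 w))).
Proof.
  apply (Clim_ext (fun v => Cmul (e c0) (Cexp (Cmul (Cmul (mkC 0 (2 * PI)) c1) v))) _ _ _ 1). lra.
  { intros. rewrite e_add. f_equal. unfold e. f_equal. field. }
  replace (e (Cadd c0 (Cmul c1 w))) with (Cmul (e c0) (Cexp (Cmul (Cmul (mkC 0 (2 * PI)) c1) w))).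
  apply Clim_mul. apply Clim_const. apply Clim_Cexp.
  rewrite e_add. f_equal. unfold e. f_equal. field.
Qed.

Lemma residue m eps tau z : (1 <= m)%nat -> 0 < Im tau ->
  Clim (fun u => Cmul (Csub u z) (F m eps tau z u)) z (Cinv (mkC 0 (2 * PI))) /\
  exists r0, 0 < r0 /\ forall u, 0 < Cnorm (Csub u z) < r0 -> ~ in_lattice tau z u.
Proof.
  intros Hm Ht.
  destruct (LB tau z z P0 Ht (fun n Hn => GG_z_neq0 tau z n Ht Hn)) as [r [dl [Hr [Hdl HLB]]]].
  destruct (SER m eps tau z z r dl P0 Hm Ht Hr Hdl HLB) as [Hc [D [KK [HKK HS]]]].
  set (S0 := fun u => Zsum (fun n => Cmul (cc m eps tau n) (Fm m tau z P0 n u))) in *.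
  set (phi := GG tau z 0).
  assert (Hphi : QB phi z (Cadd C0 (Cmul (Copp (bb tau z 0)) (Cmul ga (Cexp (Cmul ga z)))))
     (0 + Cnorm (Copp (bb tau z 0)) * (Cnorm (Cexp (Cmul ga z)) * Kexp (Cnorm ga * 1) * (Cnorm ga * Cnorm ga))) 1).
  { apply (QB_ext (fun u => Cadd C1 (Cmul (Copp (bb tau z 0)) (Cexp (Cmul ga u))))).
    intro u; unfold phi, GG; field.
    apply QB_add. apply QB_const. apply QB_scal. apply QB_exp. lra. }
  assert (Ebz : Cmul (bb tau z 0) (Cexp (Cmul ga z)) = C1).
  { unfold bb. simpl Cpowz. unfold e, ga.
    replace (Cexp (Cmul (Copp (mkC 0 (2 * PI))) z)) with (Cexp (Copp (Cmul (mkC 0 (2 * PI)) z))) by (f_equal; ring).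
    transitivity (Cmul (Cexp (Cmul (mkC 0 (2 * PI)) z)) (Cexp (Copp (Cmul (mkC 0 (2 * PI)) z)))). ring. apply Cexp_opp. }
  assert (phiz : phi z = C0) by (unfold phi, GG; rewrite Ebz; apply Cext; simpl; ring).
  assert (HK0 : 0 <= 0 + Cnorm (Copp (bb tau z 0)) * (Cnorm (Cexp (Cmul ga z)) * Kexp (Cnorm ga * 1) * (Cnorm ga * Cnorm ga))).
  { apply Rplus_le_le_0_compat. lra. apply Rmult_le_pos. apply Cnorm_ge0.
    apply Rmult_le_pos. apply Rmult_le_pos. apply Cnorm_ge0. apply Kexp_pos.
    pose proof (Cnorm_ge0 ga); nra. pose proof (Cnorm_ge0 ga); nra. }
  pose proof (QB_deriv_lim _ _ _ _ _ HK0 Rlt_0_1 Hphi) as HQ.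
  assert (Hd : Clim (fun u => Cdiv (phi u) (Csub u z)) z (mkC 0 (2 * PI))).
  { eapply Clim_val. apply (Clim_ext (fun u => Cdiv (Csub (phi u) (phi z)) (Csub u z)) _ _ _ 1); [lra| |exact HQ].
    intros u _. rewrite phiz. unfold Cdiv. ring.
    replace (Cmul (Copp (bb tau z 0)) (Cmul ga (Cexp (Cmul ga z)))) with
        (Copp (Cmul ga (Cmul (bb tau z 0) (Cexp (Cmul ga z))))) by ring.
    rewrite Ebz. unfold ga. apply Cext; simpl; ring. }
  assert (H2pi : mkC 0 (2 * PI) <> C0).
  { intro E. injection E. pose proof PI_RGT_0. lra. }
  destruct (Hd PI PI_RGT_0) as [r1 [Hr1 Hd1]].
  assert (phi_nz : forall u, 0 < Cnorm (Csub u z) < r1 -> phi u <> C0).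
  { intros u Hu E. specialize (Hd1 u Hu). rewrite E in Hd1.
    replace (Csub (Cdiv C0 (Csub u z)) (mkC 0 (2 * PI))) with (Copp (mkC 0 (2 * PI))) in Hd1
      by (apply Cext; unfold Cdiv, Cinv; simpl; unfold Rdiv; ring).
    rewrite Cnorm_opp in Hd1. unfold Cnorm in Hd1. simpl in Hd1.
    replace (0 * 0 + 2 * PI * (2 * PI)) with ((2 * PI) * (2 * PI)) in Hd1 by ring.
    rewrite sqrt_square in Hd1; pose proof PI_RGT_0; lra. }
  split.
  -
    assert (Bd : forall u, 0 < Cnorm (Csub u z) < r -> Cnorm (S0 u) <= Cnorm (S0 z) + (Cnorm D + KK * r) * r).
    { intros u Hu. apply (QB_bound S0 z D KK r); auto. lra. }
    pose proof (Clim_bounded_zero S0 z _ r Hr Bd) as HB0.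
    pose proof (Clim_inv _ _ _ H2pi Hd) as HI.
    destruct (QB_pre m z z 1 ltac:(lra)) as [dp [Kp [HKp Hp]]].
    pose proof (QB_Clim (pre m z) z dp Kp 1 HKp Rlt_0_1 Hp) as HP.
    pose proof (Clim_mul _ _ _ _ _ HP (Clim_add _ _ _ _ _ HB0 HI)) as HT.
    assert (Heq : forall u, 0 < Cnorm (Csub u z) < Rmin r r1 ->
      Cmul (pre m z u) (Cadd (Cmul (Csub u z) (S0 u)) (Cinv (Cdiv (phi u) (Csub u z)))) =
      Cmul (Csub u z) (F m eps tau z u)).
    { intros u Hu.
      pose proof (Rmin_l r r1). pose proof (Rmin_r r r1).
      assert (Hur : Cnorm (Csub u z) < r) by lra.
      specialize (Hc u Hur).
      assert (Hs : Zseries_lim (fun n => Cmul (cc m eps tau n) (Fm m tau z Ptrue n u))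
          (Cadd (S0 u) (PP m tau z 0 u))).
      { eapply Zseries_ext; [|exact (Zseries_add _ _ _ _ Hc (delta_series (PP m tau z 0 u)))].
        intro n. unfold Fm, Ptrue, P0. destruct (Z.eqb_spec n 0) as [->|Hn]; simpl.
        rewrite cc_0. ring. ring. }
      rewrite F_eq, (Zsum_eq _ _ Hs). fold (pre m z u).
      assert (Hz : Csub u z <> C0) by (intro E; rewrite E, Cnorm_C0 in Hu; lra).
      assert (Hph : phi u <> C0) by (apply phi_nz; lra).
      unfold PP. rewrite al_0. replace (Cmul C0 u) with C0 by ring. rewrite Cexp_0.
      fold phi. unfold Cdiv. rewrite Cinv_mul, Cinv_inv by auto. ring. }
    apply (Clim_val _ _ _ _ (Clim_ext _ _ _ _ (Rmin r r1) ltac:(apply Rmin_pos; auto) Heq HT)).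
    unfold pre. replace (Cmul (Mval m) (Csub z z)) with C0 by ring. rewrite e_0. ring.
  - exists (Rmin r r1). split. apply Rmin_pos; auto.
    intros u Hu HL. pose proof (Rmin_l r r1). pose proof (Rmin_r r r1).
    destruct (lattice_GG_zero tau z u HL) as [n Hn].
    destruct (Z.eqb_spec n 0) as [->|Hn0].
    + apply (phi_nz u). lra. auto.
    + assert (P0 n = true) by (unfold P0; destruct (Z.eqb_spec n 0); auto).
      specialize (HLB u ltac:(lra) n H1). rewrite Hn, Cnorm_C0 in HLB. lra.
Qed.

Definition fac m eps tau (a b : Z) (v : Cplx) : Cplx :=
  Cmul (sgn1 (Z.of_nat m * b + a * eps)%Z)
       (e (Copp (Cmul (Mval m) (Cadd (Cmul (IZC (a * a)) tau) (Cmul (RtoC 2) (Cmul (IZC a) v)))))).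

Lemma Clim_fac m eps tau a b w : Clim (fac m eps tau a b) w (fac m eps tau a b w).
Proof.
  set (c0 := Copp (Cmul (Mval m) (Cmul (IZC (a * a)) tau))).
  set (c1 := Copp (Cmul (Mval m) (Cmul (RtoC 2) (IZC a)))).
  assert (E : forall v, fac m eps tau a b v = Cmul (sgn1 (Z.of_nat m * b + a * eps)%Z) (e (Cadd c0 (Cmul c1 v)))).
  { intro v. unfold fac. f_equal. f_equal. unfold c0, c1. ring. }
  apply (Clim_ext (fun v => Cmul (sgn1 (Z.of_nat m * b + a * eps)%Z) (e (Cadd c0 (Cmul c1 v)))) _ _ _ 1). lra.
  intros; symmetry; apply E.
  rewrite E. apply Clim_mul. apply Clim_const. apply Clim_e.
Qed.

Lemma poles m eps tau z p : (1 <= m)%nat -> 0 < Im tau -> in_lattice tau z p ->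
  exists l, Clim (fun u => Cmul (Csub u p) (F m eps tau z u)) p l.
Proof.
  intros Hm Ht [a [b ->]].
  set (c := Cadd (Cmul (IZC a) tau) (IZC b)).
  destruct (residue m eps tau z Hm Ht) as [Hres [r0 [Hr0 Hfree]]].
  pose proof (Clim_mul _ _ _ _ _ (Clim_fac m eps tau a b z) Hres) as HT.
  pose proof (Clim_shift _ z c _ HT) as HS.
  assert (Heq : forall u, 0 < Cnorm (Csub u (Cadd z c)) < r0 ->
    Cmul (fac m eps tau a b (Csub u c)) (Cmul (Csub (Csub u c) z) (F m eps tau z (Csub u c))) =
    Cmul (Csub u (Cadd z c)) (F m eps tau z u)).
  { intros u Hu.
    set (v := Csub u c).
    assert (Hv : Csub v z = Csub u (Cadd z c)) by (unfold v; ring).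
    assert (Hvl : ~ in_lattice tau z v) by (apply Hfree; rewrite Hv; auto).
    pose proof (quasi m eps tau z a b v Hm Ht Hvl) as Q.
    replace (Cadd v (Cadd (Cmul (IZC a) tau) (IZC b))) with u in Q by (unfold v, c; ring).
    rewrite Q, Hv. unfold fac. ring. }
  eexists. exact (Clim_ext _ _ _ _ r0 Hr0 Heq HS).
Qed.

Theorem lemma3p1 (m : nat) (eps : Z) (tau z : Cplx) :
  (0 < m)%nat ->
  (eps = 0%Z \/ eps = 1%Z) ->
  0 < Im tau ->
  (forall (lam mu : Z) (u : Cplx), ~ in_lattice tau z u ->
     F m eps tau z (Cadd u (Cadd (Cmul (IZC lam) tau) (IZC mu))) =
     Cmul (sgn1 (Z.of_nat m * mu + lam * eps)%Z)
       (Cmul (e (Copp (Cmul (Mval m)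
                 (Cadd (Cmul (IZC (lam * lam)) tau) (Cmul (RtoC 2) (Cmul (IZC lam) u))))))
             (F m eps tau z u))) /\
  (forall p : Cplx, ~ in_lattice tau z p -> holomorphic_at (fun u => F m eps tau z u) p) /\
  (forall p : Cplx, in_lattice tau z p ->
     exists l : Cplx, Clim (fun u => Cmul (Csub u p) (F m eps tau z u)) p l) /\
  Clim (fun u => Cmul (Csub u z) (F m eps tau z u)) z (Cinv (mkC 0 (2 * PI))).
Proof.
  intros Hm _ Ht. assert (Hm1 : (1 <= m)%nat) by lia.
  split; [|split; [|split]].
  - intros lam mu u Hu. apply quasi; auto.
  - intros p Hp. apply holo; auto.
  - intros p Hp. apply poles; auto.
  - apply (residue m eps tau z Hm1 Ht).
Qed.
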